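(* If a path $\omega\in\Omega$ is ML-random for a computable precise forecasting system $\varphi$, then $I_\textnormal{ML}(\omega)$ is the smallest interval forecast for which $\omega$ is almost ML-random; that is, $\omega$ is almost ML-random for $I_\textnormal{ML}(\omega)$, and $I_\textnormal{ML}(\omega)\subseteq I$ for every interval forecast $I$ for which $\omega$ is almost ML-random.
   Context: $\mathcal{X}=\{0,1\}$; $\Omega=\mathcal{X}^{\mathbb{N}}$ (paths); $\mathbb{S}=\bigcup_{n\ge0}\mathcal X^n$ (situations), $\square$ the empty string, $\omega_{1:n}=(\omega_1,\dots,\omega_n)$. $\mathcal I$: nonempty closed intervals $I\subseteq[0,1]$. A forecasting system is a map $\varphi:\mathbb S\to\mathcal I$, with $\underline\varphi=\min\varphi$, $\overline\varphi=\max\varphi$; precise if $\underline\varphi=\overline\varphi$; an interval forecast $I$ is identified with the constant forecasting system $s\mapsto I$. A real map $r$ on a countable effectively encoded set $\mathcal D$ is computable if there is a recursive $q:\mathcal D\times\mathbb N_0\to\mathbb Q$ with $|r(d)-q(d,n)|<2^{-n}$; lower semicomputable if there is a recursive $q$ with $q(d,n+1)\ge q(d,n)$ and $\lim_nq(d,n)=r(d)$. $\varphi$ is computable if $\underline\varphi,\overline\varphi$ are. For $f:\mathcal X\to\mathbb R$, $\overline E_I(f)=\max_{p\in I}[pf(1)+(1-p)f(0)]$. A test supermartingale for $\varphi$ is $T:\mathbb S\to\mathbb R_{\ge0}$ with $T(\square)=1$ and $\overline E_{\varphi(s)}(T(s\,\cdot)-T(s))\le0$ for all $s$. $\omega$ is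 ML-random for $\varphi$ if no lower semicomputable test supermartingale $T$ for $\varphi$ satisfies $\limsup_nT(\omega_{1:n})=\infty$. $\mathcal I_\textnormal{ML}(\omega)=\{I\in\mathcal I:\omega\text{ ML-random for }I\}$, $I_\textnormal{ML}(\omega)=\bigcap_{I\in\mathcal I_\textnormal{ML}(\omega)}I$. $\omega$ is almost ML-random for $I\in\mathcal I$ if it is ML-random for every interval forecast $[\min I-\epsilon_1,\max I+\epsilon_2]\cap[0,1]$ with $\epsilon_1,\epsilon_2>0$. *)

(* Defs.v *)
From Stdlib Require Import Reals Lra Lia List Arith.
Import ListNotations.
Open Scope R_scope.

Inductive code : Type :=
| CZero : code
| CSucc : code
| CProj : nat -> code
| CComp : code -> list code -> code
| CPrimRec : code -> code -> code
| CMu : code -> code.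

Inductive eval : code -> list nat -> nat -> Prop :=
| ev_zero : forall v, eval CZero v 0
| ev_succ : forall x v, eval CSucc (x :: v) (S x)
| ev_proj : forall i v, (i < length v)%nat -> eval (CProj i) v (nth i v 0%nat)
| ev_comp : forall f gs v ys y,
    evals gs v ys -> eval f ys y -> eval (CComp f gs) v y
| ev_rec0 : forall f g v y, eval f v y -> eval (CPrimRec f g) (0%nat :: v) y
| ev_recS : forall f g n v z y,
    eval (CPrimRec f g) (n :: v) z -> eval g (n :: z :: v) y ->
    eval (CPrimRec f g) (S n :: v) y
| ev_mu : forall f v n,
    eval f (n :: v) 0 ->
    (forall m, (m < n)%nat -> exists k, eval f (m :: v) (S k)) ->
    eval (CMu f) v n
with evals : list code -> list nat -> list nat -> Prop :=
| evs_nil : forall v, evals [] v []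
| evs_cons : forall g gs v y ys,
    eval g v y -> evals gs v ys -> evals (g :: gs) v (y :: ys).

Definition npair (x y : nat) : nat := ((x + y) * (x + y + 1) / 2 + y)%nat.

(* bijective base-2 encoding of situations (finite binary strings) *)
Fixpoint enc_sit (s : list bool) : nat :=
  match s with
  | [] => 0%nat
  | b :: s' => (2 * enc_sit s' + (if b then 2 else 1))%nat
  end.

(** A map q : S x N -> Q is recursive: some mu-recursive program maps the code
    of (d, n) to the code of a triple (a, b, k) with q d n = (a - b)/(k + 1). *)
Definition recursive_rat (q : list bool -> nat -> R) : Prop :=
  exists c : code, forall (d : list bool) (n : nat),
    exists a b k : nat,
      eval c [npair (enc_sit d) n] (npair a (npair b k)) /\
      q d n = (INR a - INR b) / (INR k + 1).

Definition computable (r : list bool -> R) : Prop :=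
  exists q, recursive_rat q /\
    forall d n, Rabs (r d - q d n) < (/ 2) ^ n.

Definition lower_semicomputable (r : list bool -> R) : Prop :=
  exists q, recursive_rat q /\
    (forall d n, q d n <= q d (S n)) /\
    (forall d, Un_cv (q d) (r d)).

(* a path omega = (omega_1, omega_2, ...) is represented by w : nat -> bool
   with omega_{i+1} = w i; omega_{1:n} is the list [w 0; ...; w (n-1)] *)
Definition prefix (w : nat -> bool) (n : nat) : list bool := map w (seq 0 n).

(* a forecasting system phi is given by its lower and upper maps
   lo = min phi, hi = max phi *)
Definition forecasting_system (lo hi : list bool -> R) : Prop :=
  forall s, 0 <= lo s /\ lo s <= hi s /\ hi s <= 1.

Definition upper_exp (a b : R) (f : bool -> R) : R :=
  Rmax (a * f true + (1 - a) * f false) (b * f true + (1 - b) * f false).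

(* situation s followed by outcome x is s ++ [x] *)
Definition test_supermartingale (lo hi : list bool -> R) (T : list bool -> R) : Prop :=
  T [] = 1 /\ (forall s, 0 <= T s) /\
  (forall s, upper_exp (lo s) (hi s) (fun x => T (s ++ [x]) - T s) <= 0).

Definition ML_random (lo hi : list bool -> R) (w : nat -> bool) : Prop :=
  ~ exists T, lower_semicomputable T /\ test_supermartingale lo hi T /\
      (forall (M : R) (N : nat), exists n, (N <= n)%nat /\ M < T (prefix w n)).

(* interval forecast [a,b] as a constant forecasting system *)
Definition is_interval (a b : R) : Prop := 0 <= a /\ a <= b /\ b <= 1.

Definition ML_random_I (a b : R) (w : nat -> bool) : Prop :=
  ML_random (fun _ => a) (fun _ => b) w.

Definition I_ML (w : nat -> bool) (x : R) : Prop :=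
  forall a b, is_interval a b -> ML_random_I a b w -> a <= x /\ x <= b.

Definition almost_ML_random (a b : R) (w : nat -> bool) : Prop :=
  forall e1 e2, 0 < e1 -> 0 < e2 ->
    ML_random_I (Rmax (a - e1) 0) (Rmin (b + e2) 1) w.

(* Main.v *)
Require Import Defs.
From Stdlib Require Import Reals Lra Lia List Arith ZArith Classical ClassicalEpsilon.
Import ListNotations.
Open Scope R_scope.

Open Scope R_scope.

Definition PR (n : nat) (f : list nat -> nat) : Prop :=
  exists c, forall v, length v = n -> eval c v (f v).

Lemma PR_ext n f g : (forall v, length v = n -> f v = g v) -> PR n f -> PR n g.
Proof. intros H [c Hc]. exists c. intros v Hv. rewrite <- H by exact Hv. auto. Qed.

Lemma PR_proj n i : (i < n)%nat -> PR n (fun v => nth i v 0%nat).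
Proof. intros H. exists (CProj i). intros v Hv. constructor. lia. Qed.

Lemma PR_zero n : PR n (fun _ => 0%nat).
Proof. exists CZero. intros. constructor. Qed.

Lemma PR_succ : PR 1 (fun v => S (nth 0 v 0%nat)).
Proof. exists CSucc. intros v Hv. destruct v as [|x [|]]; simpl in Hv; try lia.
  simpl. constructor. Qed.

Lemma PR_comp_list n (fs : list (list nat -> nat)) g :
  Forall (PR n) fs -> PR (length fs) g ->
  PR n (fun v => g (map (fun f => f v) fs)).
Proof.
  intros Hfs Hg0.
  assert (H : exists gs, forall v, length v = n -> evals gs v (map (fun f => f v) fs)).
  { clear Hg0. induction Hfs as [|f fs Hf _ IH].
    - exists []. intros. constructor.
    - destruct Hf as [cf Hf]. destruct IH as [gs IH].
      exists (cf :: gs). intros v Hv. simpl. constructor; auto. }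
  destruct Hg0 as [cg Hg]. destruct H as [gs Hgs]. exists (CComp cg gs). intros v Hv.
  econstructor. apply Hgs; auto. apply Hg. rewrite length_map. reflexivity.
Qed.

Lemma PR_rec n f g : PR n f -> PR (S (S n)) g ->
  PR (S n) (fun v => nat_rect (fun _ => nat) (f (tl v)) (fun i z => g (i :: z :: tl v)) (hd 0%nat v)).
Proof.
  intros [cf Hf] [cg Hg]. exists (CPrimRec cf cg). intros v Hv.
  destruct v as [|x v]; simpl in Hv; try lia. simpl.
  induction x as [|x IH].
  - constructor. apply Hf. lia.
  - simpl. econstructor. exact IH. apply Hg. simpl. lia.
Qed.

Definition a0 (v : list nat) := nth 0 v 0%nat.
Definition a1 (v : list nat) := nth 1 v 0%nat.
Definition a2 (v : list nat) := nth 2 v 0%nat.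

Definition PR1 (h : nat -> nat) := PR 1 (fun v => h (a0 v)).
Definition PR2 (h : nat -> nat -> nat) := PR 2 (fun v => h (a0 v) (a1 v)).
Definition PR3 (h : nat -> nat -> nat -> nat) := PR 3 (fun v => h (a0 v) (a1 v) (a2 v)).

Lemma PR_c1 n a h : PR n a -> PR1 h -> PR n (fun v => h (a v)).
Proof. intros Ha Hh. 
  pose proof (PR_comp_list n [a] (fun v => h (a0 v)) ltac:(repeat constructor; auto) Hh).
  exact H. Qed.

Lemma PR_c2 n a b h : PR n a -> PR n b -> PR2 h -> PR n (fun v => h (a v) (b v)).
Proof. intros Ha Hb Hh.
  exact (PR_comp_list n [a; b] (fun v => h (a0 v) (a1 v)) ltac:(repeat constructor; auto) Hh).
Qed.

Lemma PR_c3 n a b c h : PR n a -> PR n b -> PR n c -> PR3 h -> PR n (fun v => h (a v) (b v) (c v)).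
Proof. intros Ha Hb Hc Hh.
  exact (PR_comp_list n [a; b; c] (fun v => h (a0 v) (a1 v) (a2 v)) ltac:(repeat constructor; auto) Hh).
Qed.

Lemma PR_const n k : PR n (fun _ => k).
Proof. induction k. apply PR_zero.
  apply (PR_c1 n (fun _ => k) S IHk). exact PR_succ. Qed.

Lemma PR_a0 n : (0 < n)%nat -> PR n a0.
Proof. intros. apply PR_proj. auto. Qed.
Lemma PR_a1 n : (1 < n)%nat -> PR n a1.
Proof. intros. apply PR_proj. auto. Qed.
Lemma PR_a2 n : (2 < n)%nat -> PR n a2.
Proof. intros. apply PR_proj. auto. Qed.

Lemma PR2_rec (b : nat -> nat) (s : nat -> nat -> nat -> nat) :
  PR1 b -> PR3 s -> PR2 (fun x y => nat_rect (fun _ => nat) (b y) (fun i z => s i z y) x).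
Proof.
  intros Hb Hs. unfold PR2.
  eapply PR_ext; [|apply (PR_rec 1 (fun v => b (a0 v)) (fun v => s (a0 v) (a1 v) (a2 v)) Hb Hs)].
  intros v Hv. destruct v as [|x [|y [|]]]; simpl in Hv; try lia. reflexivity.
Qed.

Lemma PR1_rec (b : nat) (s : nat -> nat -> nat) :
  PR2 s -> PR1 (fun x => nat_rect (fun _ => nat) b (fun i z => s i z) x).
Proof.
  intros Hs.
  assert (H : PR2 (fun x y => nat_rect (fun _ => nat) ((fun _ => b) y) (fun i z => (fun i z _ => s i z) i z y) x)).
  { apply PR2_rec. unfold PR1. eapply PR_ext; [|apply (PR_const 1 b)]. reflexivity. unfold PR3.
    apply (PR_c2 3 a0 a1 s); auto using PR_a0, PR_a1. }
  unfold PR1. apply (PR_c2 1 a0 (fun _ => 0%nat) _ (PR_a0 1 ltac:(lia)) (PR_const 1 0) H).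
Qed.

Open Scope R_scope.
Local Open Scope nat_scope.

Lemma PR1_ext f g : (forall x, f x = g x) -> PR1 f -> PR1 g.
Proof. intros H. apply PR_ext. intros. apply H. Qed.
Lemma PR2_ext f g : (forall x y, f x y = g x y) -> PR2 f -> PR2 g.
Proof. intros H. apply PR_ext. intros. apply H. Qed.
Lemma PR3_ext f g : (forall x y z, f x y z = g x y z) -> PR3 f -> PR3 g.
Proof. intros H. apply PR_ext. intros. apply H. Qed.

Lemma PR1_id : PR1 (fun x => x).
Proof. apply PR_a0. lia. Qed.

Lemma PR2_l : PR2 (fun x y => x).
Proof. apply PR_a0. lia. Qed.
Lemma PR2_r : PR2 (fun x y => y).
Proof. apply PR_a1. lia. Qed.
Lemma PR3_1 : PR3 (fun x y z => x).
Proof. apply PR_a0. lia. Qed.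
Lemma PR3_2 : PR3 (fun x y z => y).
Proof. apply PR_a1. lia. Qed.
Lemma PR3_3 : PR3 (fun x y z => z).
Proof. apply PR_a2. lia. Qed.

Lemma PR1_c1 f h : PR1 f -> PR1 h -> PR1 (fun x => h (f x)).
Proof. intros; apply (PR_c1 1 (fun v => f (a0 v))); auto. Qed.
Lemma PR1_c2 f g h : PR1 f -> PR1 g -> PR2 h -> PR1 (fun x => h (f x) (g x)).
Proof. intros; apply (PR_c2 1 (fun v => f (a0 v)) (fun v => g (a0 v))); auto. Qed.
Lemma PR2_c1 f h : PR2 f -> PR1 h -> PR2 (fun x y => h (f x y)).
Proof. intros; apply (PR_c1 2 (fun v => f (a0 v) (a1 v))); auto. Qed.
Lemma PR2_c2 f g h : PR2 f -> PR2 g -> PR2 h -> PR2 (fun x y => h (f x y) (g x y)).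
Proof. intros; apply (PR_c2 2 (fun v => f (a0 v) (a1 v)) (fun v => g (a0 v) (a1 v))); auto. Qed.
Lemma PR2_c3 f g k h : PR2 f -> PR2 g -> PR2 k -> PR3 h -> PR2 (fun x y => h (f x y) (g x y) (k x y)).
Proof. intros; apply (PR_c3 2 (fun v => f (a0 v) (a1 v)) (fun v => g (a0 v) (a1 v)) (fun v => k (a0 v) (a1 v))); auto. Qed.
Lemma PR3_c1 f h : PR3 f -> PR1 h -> PR3 (fun x y z => h (f x y z)).
Proof. intros; apply (PR_c1 3 (fun v => f (a0 v) (a1 v) (a2 v))); auto. Qed.
Lemma PR3_c2 f g h : PR3 f -> PR3 g -> PR2 h -> PR3 (fun x y z => h (f x y z) (g x y z)).
Proof. intros; apply (PR_c2 3 (fun v => f (a0 v) (a1 v) (a2 v)) (fun v => g (a0 v) (a1 v) (a2 v))); auto. Qed.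
Lemma PR3_c3 f g k h : PR3 f -> PR3 g -> PR3 k -> PR3 h -> PR3 (fun x y z => h (f x y z) (g x y z) (k x y z)).
Proof. intros; apply (PR_c3 3 (fun v => f (a0 v) (a1 v) (a2 v)) (fun v => g (a0 v) (a1 v) (a2 v)) (fun v => k (a0 v) (a1 v) (a2 v))); auto. Qed.
Lemma PR1_const k : PR1 (fun _ => k).
Proof. apply (PR_const 1 k). Qed.
Lemma PR2_const k : PR2 (fun _ _ => k).
Proof. apply (PR_const 2 k). Qed.
Lemma PR3_const k : PR3 (fun _ _ _ => k).
Proof. apply (PR_const 3 k). Qed.
Lemma PR1_S : PR1 S.
Proof. exact PR_succ. Qed.

Lemma PR_add : PR2 Nat.add.
Proof.
  eapply PR2_ext; [|apply (PR2_rec (fun y => y) (fun i z y => S z)); [apply PR1_id|apply (PR3_c1 _ S PR3_2 PR1_S)]].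
  intros x y. simpl. induction x; simpl; auto.
Qed.

Lemma PR_mul : PR2 Nat.mul.
Proof.
  eapply PR2_ext; [|apply (PR2_rec (fun y => 0) (fun i z y => z + y)); [apply PR1_const|apply (PR3_c2 _ _ _ PR3_2 PR3_3 PR_add)]].
  intros x y. simpl. induction x; simpl; auto. rewrite IHx. lia.
Qed.

Lemma PR_pred : PR1 Nat.pred.
Proof.
  eapply PR1_ext; [|apply (PR1_rec 0 (fun i z => i)); apply PR2_l].
  intros x; destruct x; reflexivity.
Qed.

Lemma PR2_swap h : PR2 h -> PR2 (fun x y => h y x).
Proof. intros; apply (PR2_c2 _ _ _ PR2_r PR2_l); auto. Qed.

Lemma PR_sub : PR2 Nat.sub.
Proof.
  assert (H : PR2 (fun y x => nat_rect (fun _ => nat) x (fun i z => Nat.pred z) y)).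
  { apply PR2_rec. apply PR1_id. apply (PR3_c1 _ _ PR3_2 PR_pred). }
  eapply PR2_ext; [|apply (PR2_swap _ H)].
  intros x y. simpl. induction y; simpl. lia. rewrite IHy. lia.
Qed.

Definition sg (x : nat) := if x =? 0 then 0 else 1.
Lemma PR_sg : PR1 sg.
Proof. eapply PR1_ext; [|apply (PR1_rec 0 (fun _ _ => 1)); apply PR2_const].
  intros [|x]; reflexivity. Qed.

Definition ifz (a b c : nat) := if a =? 0 then b else c.
Lemma PR_ifz : PR3 ifz.
Proof.
  assert (H : PR3 (fun a b c => (1 - sg a) * b + sg a * c)).
  { apply (PR3_c2 _ _ _ (PR3_c2 _ _ _ (PR3_c2 _ _ _ (PR3_const 1) (PR3_c1 _ _ PR3_1 PR_sg) PR_sub) PR3_2 PR_mul)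
      (PR3_c2 _ _ _ (PR3_c1 _ _ PR3_1 PR_sg) PR3_3 PR_mul) PR_add). }
  eapply PR3_ext; [|apply H]. intros [|a] b c; unfold ifz, sg; simpl; lia.
Qed.

Definition b2n (b : bool) := if b then 1 else 0.
Lemma PR_ltb : PR2 (fun x y => b2n (x <? y)).
Proof.
  eapply PR2_ext; [|apply (PR2_c1 _ _ (PR2_swap _ PR_sub) PR_sg)].
  intros x y. simpl. unfold sg, b2n. destruct (x <? y) eqn:E.
  apply Nat.ltb_lt in E. destruct (y - x) eqn:E2; simpl; lia.
  apply Nat.ltb_ge in E. replace (y - x) with 0 by lia. reflexivity.
Qed.

Lemma PR_eqb : PR2 (fun x y => b2n (x =? y)).
Proof.
  assert (H : PR2 (fun x y => 1 - sg ((x - y) + (y - x)))).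
  { apply (PR2_c2 _ _ _ (PR2_const 1) (PR2_c1 _ _ (PR2_c2 _ _ _ PR_sub (PR2_swap _ PR_sub) PR_add) PR_sg) PR_sub). }
  eapply PR2_ext; [|apply H]. intros x y. unfold sg, b2n.
  destruct (x =? y) eqn:E. apply Nat.eqb_eq in E. subst. rewrite Nat.sub_diag. reflexivity.
  apply Nat.eqb_neq in E. destruct (x - y + (y - x)) eqn:E2; simpl; lia.
Qed.

Lemma PR_ite (c : nat -> nat -> bool) f g : PR2 (fun x y => b2n (c x y)) -> PR2 f -> PR2 g ->
  PR2 (fun x y => if c x y then f x y else g x y).
Proof.
  intros Hc Hf Hg. eapply PR2_ext; [|apply (PR2_c3 _ _ _ _ Hc Hg Hf PR_ifz)].
  intros x y. unfold ifz, b2n. destruct (c x y); reflexivity.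
Qed.

Definition par (x : nat) := if Nat.odd x then 1 else 0.
Lemma PR_par : PR1 par.
Proof.
  eapply PR1_ext; [|apply (PR1_rec 0 (fun _ z => 1 - z)); apply (PR2_c2 _ _ _ (PR2_const 1) PR2_r PR_sub)].
  intros x. induction x. reflexivity. cbn [nat_rect]. cbn [nat_rect] in IHx. rewrite IHx. unfold par.
  rewrite Nat.odd_succ, <- Nat.negb_odd. destruct (Nat.odd x); reflexivity.
Qed.

Lemma PR_div2 : PR1 Nat.div2.
Proof.
  eapply PR1_ext; [|apply (PR1_rec 0 (fun i z => z + par i)); apply (PR2_c2 _ _ _ PR2_r (PR2_c1 _ _ PR2_l PR_par) PR_add)].
  intros x. induction x. reflexivity. cbn [nat_rect]. cbn [nat_rect] in IHx. rewrite IHx. unfold par.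
  pose proof (Nat.div2_odd x). pose proof (Nat.div2_odd (S x)).
  rewrite Nat.odd_succ, <- Nat.negb_odd in H0. destruct (Nat.odd x); simpl in *; lia.
Qed.

Fixpoint tri (n : nat) := match n with 0 => 0 | S i => tri i + S i end.
Lemma PR_tri : PR1 tri.
Proof.
  eapply PR1_ext; [|apply (PR1_rec 0 (fun i z => z + S i)); apply (PR2_c2 _ _ _ PR2_r (PR2_c1 _ _ PR2_l PR1_S) PR_add)].
  intros x. induction x. reflexivity. cbn [nat_rect]. rewrite IHx. reflexivity.
Qed.

Lemma tri_eq n : tri n = n * (n + 1) / 2.
Proof.
  assert (H : 2 * tri n = n * (n + 1)). { induction n; simpl; lia. }
  rewrite <- H. rewrite Nat.mul_comm. rewrite Nat.div_mul; lia.
Qed.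

Lemma npair_tri x y : npair x y = tri (x + y) + y.
Proof. unfold npair. rewrite tri_eq. reflexivity. Qed.

Lemma PR_npair : PR2 npair.
Proof.
  eapply PR2_ext; [|apply (PR2_c2 _ _ _ (PR2_c1 _ _ PR_add PR_tri) PR2_r PR_add)].
  intros. rewrite npair_tri. reflexivity.
Qed.

Fixpoint cntd (z m : nat) := match m with 0 => 0 | S i => cntd z i + b2n (tri (S i) <=? z) end.
Definition diag (z : nat) := cntd z z.
Definition unp1 (z : nat) := diag z - (z - tri (diag z)).
Definition unp2 (z : nat) := z - tri (diag z).

Lemma PR_leb : PR2 (fun x y => b2n (x <=? y)).
Proof.
  eapply PR2_ext; [|apply (PR2_c2 _ _ _ PR2_l (PR2_c1 _ _ PR2_r PR1_S) PR_ltb)].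
  intros x y. reflexivity.
Qed.

Lemma PR_diag : PR1 diag.
Proof.
  assert (H : PR2 (fun m z => nat_rect (fun _ => nat) 0 (fun i c => c + b2n (tri (S i) <=? z)) m)).
  { apply PR2_rec. apply PR1_const.
    apply (PR3_c2 _ _ _ PR3_2 (PR3_c2 _ _ _ (PR3_c1 _ _ PR3_1 (PR1_c1 _ _ PR1_S PR_tri)) PR3_3 PR_leb) PR_add). }
  eapply PR1_ext; [|apply (PR1_c2 _ _ _ PR1_id PR1_id H)].
  intros z. unfold diag. cbv beta.
  assert (forall m, nat_rect (fun _ => nat) 0 (fun i c => c + b2n (tri (S i) <=? z)) m = cntd z m) as E.
  { induction m. reflexivity. cbn [nat_rect cntd]. rewrite IHm. reflexivity. }
  apply E.
Qed.

Lemma PR_unp2 : PR1 unp2.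
Proof. apply (PR1_c2 _ _ _ PR1_id (PR1_c1 _ _ PR_diag PR_tri) PR_sub). Qed.
Lemma PR_unp1 : PR1 unp1.
Proof. apply (PR1_c2 _ _ _ PR_diag PR_unp2 PR_sub). Qed.

Lemma tri_mono a b : a <= b -> tri a <= tri b.
Proof. induction 1; simpl; lia. Qed.

Lemma cntd_spec z t m : tri t <= z < tri (S t) -> cntd z m = Nat.min m t.
Proof.
  intros [H1 H2]. induction m. simpl. lia. cbn [cntd]. rewrite IHm. unfold b2n.
  destruct (tri (S m) <=? z) eqn:E.
  - apply Nat.leb_le in E. assert (m < t). { destruct (Nat.lt_ge_cases m t); auto.
      pose proof (tri_mono (S t) (S m) ltac:(lia)). lia. } lia.
  - apply Nat.leb_gt in E. assert (t <= m). { destruct (Nat.lt_ge_cases m t); auto.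
      pose proof (tri_mono (S m) t ltac:(lia)). lia. } lia.
Qed.

Lemma tri_ge n : n <= tri n.
Proof. induction n; simpl; lia. Qed.

Lemma diag_spec z t : tri t <= z < tri (S t) -> diag z = t.
Proof. intros H. unfold diag. rewrite (cntd_spec z t z H). pose proof (tri_ge t). lia. Qed.

Lemma unp_npair x y : unp1 (npair x y) = x /\ unp2 (npair x y) = y.
Proof.
  rewrite npair_tri. assert (diag (tri (x + y) + y) = x + y).
  { apply diag_spec. simpl. lia. }
  unfold unp1, unp2. rewrite H. lia.
Qed.

Lemma npair_surj z : exists x y, npair x y = z.
Proof.
  induction z. exists 0, 0. reflexivity.
  destruct IHz as [x [y H]]. rewrite npair_tri in H. destruct x.
  - exists (S y), 0. rewrite npair_tri, !Nat.add_0_r. simpl in H |- *. lia.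
  - exists x, (S y). rewrite npair_tri. rewrite <- H. replace (x + S y) with (S x + y) by lia. lia.
Qed.

Lemma npair_unp z : npair (unp1 z) (unp2 z) = z.
Proof. destruct (npair_surj z) as [x [y H]]. subst. destruct (unp_npair x y) as [-> ->]. reflexivity. Qed.

Lemma npair_inj x y x' y' : npair x y = npair x' y' -> x = x' /\ y = y'.
Proof. intros H. destruct (unp_npair x y) as [A B]. destruct (unp_npair x' y') as [C D].
  rewrite H in A, B. split; congruence. Qed.

Lemma enc_inj s t : enc_sit s = enc_sit t -> s = t.
Proof.
  revert t. induction s as [|b s IH]; intros [|b' t]; simpl; intros H; try (destruct b; lia); try (destruct b'; lia); auto.
  destruct b, b'; try lia; f_equal; apply IH; lia.
Qed.

Lemma enc_surj n : exists s, enc_sit s = n.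
Proof.
  induction n as [n IH] using lt_wf_ind. destruct n. exists []. reflexivity.
  destruct (Nat.Even_or_Odd n) as [[m Hm]|[m Hm]].
  - destruct (IH m ltac:(lia)) as [s Hs]. exists (false :: s). simpl. lia.
  - destruct (IH m ltac:(lia)) as [s Hs]. exists (true :: s). simpl. lia.
Qed.

Open Scope R_scope.
Local Open Scope nat_scope.

Lemma PR1_c3 f g k h : PR1 f -> PR1 g -> PR1 k -> PR3 h -> PR1 (fun x => h (f x) (g x) (k x)).
Proof. intros; apply (PR_c3 1 (fun v => f (a0 v)) (fun v => g (a0 v)) (fun v => k (a0 v))); auto. Qed.

Definition pack4 a b c d := npair a (npair b (npair c d)).
Definition p1 x := unp1 x.
Definition p2 x := unp1 (unp2 x).
Definition p3 x := unp1 (unp2 (unp2 x)).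
Definition p4 x := unp2 (unp2 (unp2 x)).
Lemma pack4_proj a b c d : p1 (pack4 a b c d) = a /\ p2 (pack4 a b c d) = b /\ p3 (pack4 a b c d) = c /\ p4 (pack4 a b c d) = d.
Proof. unfold pack4, p1, p2, p3, p4.
  destruct (unp_npair a (npair b (npair c d))) as [-> ->].
  destruct (unp_npair b (npair c d)) as [-> ->].
  destruct (unp_npair c d) as [-> ->]. auto. Qed.
Lemma PR_p1 : PR1 p1. Proof. exact PR_unp1. Qed.
Lemma PR_p2 : PR1 p2. Proof. apply (PR1_c1 _ _ PR_unp2 PR_unp1). Qed.
Lemma PR_p3 : PR1 p3. Proof. apply (PR1_c1 _ _ (PR1_c1 _ _ PR_unp2 PR_unp2) PR_unp1). Qed.
Lemma PR_p4 : PR1 p4. Proof. apply (PR1_c1 _ _ (PR1_c1 _ _ PR_unp2 PR_unp2) PR_unp2). Qed.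
Lemma PR_pack4 f g h k : PR1 f -> PR1 g -> PR1 h -> PR1 k -> PR1 (fun x => pack4 (f x) (g x) (h x) (k x)).
Proof. intros. unfold pack4. apply (PR1_c2 _ _ _ H (PR1_c2 _ _ _ H0 (PR1_c2 _ _ _ H1 H2 PR_npair) PR_npair) PR_npair). Qed.

Definition stepN (U : nat -> nat -> nat -> nat) (x : nat) : nat :=
  ifz (p1 x) x
    (pack4 (Nat.div2 (p1 x - (2 - par (p1 x)))) (p2 x + (2 - par (p1 x)) * p3 x) (p3 x + p3 x)
       (U (p4 x) (p2 x) (1 - par (p1 x)))).

Lemma PR_stepN U : PR3 U -> PR1 (stepN U).
Proof.
  intros HU. unfold stepN.
  assert (Hd : PR1 (fun x => 2 - par (p1 x))) by apply (PR1_c2 _ _ _ (PR1_const 2) (PR1_c1 _ _ PR_p1 PR_par) PR_sub).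
  apply (PR1_c3 _ _ _ _ PR_p1 PR1_id); [|apply PR_ifz].
  apply PR_pack4.
  - apply (PR1_c1 _ _ (PR1_c2 _ _ _ PR_p1 Hd PR_sub) PR_div2).
  - apply (PR1_c2 _ _ _ PR_p2 (PR1_c2 _ _ _ Hd PR_p3 PR_mul) PR_add).
  - apply (PR1_c2 _ _ _ PR_p3 PR_p3 PR_add).
  - apply (PR1_c3 _ _ _ _ PR_p4 PR_p2 (PR1_c2 _ _ _ (PR1_const 1) (PR1_c1 _ _ PR_p1 PR_par) PR_sub) HU).
Qed.

Lemma PR_iter step init : PR1 step -> PR1 init -> PR1 (fun e => Nat.iter e step (init e)).
Proof.
  intros Hs Hi.
  assert (H : PR2 (fun j e => nat_rect (fun _ => nat) (init e) (fun i z => step z) j)).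
  { apply PR2_rec. auto. apply (PR3_c1 _ _ PR3_2 Hs). }
  eapply PR1_ext; [|apply (PR1_c2 _ _ _ PR1_id PR1_id H)].
  intros e. cbv beta.
  assert (forall j, nat_rect (fun _ => nat) (init e) (fun i z => step z) j = Nat.iter j step (init e)) as E.
  { induction j. reflexivity. cbn [nat_rect Nat.iter]. rewrite IHj. reflexivity. }
  apply E.
Qed.

Fixpoint ufoldL (U : nat -> nat -> nat -> nat) (pre s : list bool) (u : nat) : nat :=
  match s with
  | [] => u
  | b :: s' => ufoldL U (pre ++ [b]) s' (U u (enc_sit pre) (b2n b))
  end.

Lemma ufoldL_snoc U pre s x u :
  ufoldL U pre (s ++ [x]) u = U (ufoldL U pre s u) (enc_sit (pre ++ s)) (b2n x).
Proof.
  revert pre u. induction s as [|b s IH]; intros pre u; simpl.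
  - rewrite app_nil_r. reflexivity.
  - rewrite IH. rewrite <- app_assoc. reflexivity.
Qed.

Lemma enc_snoc pre b : enc_sit (pre ++ [b]) = enc_sit pre + (if b then 2 else 1) * 2 ^ length pre.
Proof. induction pre as [|a pre IH]; simpl. destruct b; reflexivity. rewrite IH. destruct a, b; simpl; lia. Qed.

Lemma enc_len s : length s <= enc_sit s.
Proof. induction s as [|b s IH]; simpl; [lia|destruct b; lia]. Qed.

Lemma par_even n : par (2 * n + 2) = 0 /\ par (2 * n + 1) = 1.
Proof. unfold par. split.
  - replace (2 * n + 2) with (2 * (n + 1)) by lia. rewrite Nat.odd_mul. reflexivity.
  - rewrite Nat.add_comm, Nat.odd_add_mul_2. reflexivity. Qed.

Lemma stepN_cons U b s pre u :
  stepN U (pack4 (enc_sit (b :: s)) (enc_sit pre) (2 ^ length pre) u) =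
  pack4 (enc_sit s) (enc_sit (pre ++ [b])) (2 ^ length (pre ++ [b])) (U u (enc_sit pre) (b2n b)).
Proof.
  unfold stepN. destruct (pack4_proj (enc_sit (b :: s)) (enc_sit pre) (2 ^ length pre) u) as [-> [-> [-> ->]]].
  rewrite enc_snoc, length_app. cbn [enc_sit]. destruct (par_even (enc_sit s)) as [E1 E2].
  rewrite Nat.pow_add_r. cbn [length]. rewrite Nat.pow_1_r.
  unfold ifz. destruct b.
  - rewrite E1. replace (2 * enc_sit s + 2 =? 0) with false by (symmetry; apply Nat.eqb_neq; lia).
    replace (2 * enc_sit s + 2 - (2 - 0)) with (2 * enc_sit s) by lia. rewrite Nat.div2_double.
    simpl b2n. f_equal; lia.
  - rewrite E2. replace (2 * enc_sit s + 1 =? 0) with false by (symmetry; apply Nat.eqb_neq; lia).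
    replace (2 * enc_sit s + 1 - (2 - 1)) with (2 * enc_sit s) by lia. rewrite Nat.div2_double.
    simpl b2n. f_equal; lia.
Qed.

Lemma iter_succ_r {A} n (f : A -> A) x : Nat.iter (S n) f x = Nat.iter n f (f x).
Proof. induction n. reflexivity. simpl in *. rewrite <- IHn. reflexivity. Qed.

Lemma iter_fold U s pre u :
  Nat.iter (length s) (stepN U) (pack4 (enc_sit s) (enc_sit pre) (2 ^ length pre) u) =
  pack4 0 (enc_sit (pre ++ s)) (2 ^ length (pre ++ s)) (ufoldL U pre s u).
Proof.
  revert pre u. induction s as [|b s IH]; intros pre u.
  - simpl. rewrite app_nil_r. reflexivity.
  - simpl length. rewrite iter_succ_r. rewrite stepN_cons. rewrite IH. rewrite <- app_assoc. reflexivity.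
Qed.

Lemma iter_fix U k x : p1 x = 0 -> Nat.iter k (stepN U) x = x.
Proof. intros H. induction k. reflexivity. simpl. rewrite IHk. unfold stepN, ifz. rewrite H. reflexivity. Qed.

Definition runU (U : nat -> nat -> nat -> nat) (u0 : nat) (e : nat) : nat :=
  p4 (Nat.iter e (stepN U) (pack4 e 0 1 u0)).

Lemma runU_enc U u0 s : runU U u0 (enc_sit s) = ufoldL U [] s u0.
Proof.
  unfold runU. pose proof (enc_len s).
  assert (E: Nat.iter (enc_sit s) (stepN U) (pack4 (enc_sit s) 0 1 u0) = Nat.iter (enc_sit s - length s) (stepN U) (Nat.iter (length s) (stepN U) (pack4 (enc_sit s) 0 1 u0))).
  { rewrite <- Nat.iter_add. f_equal. lia. }
  rewrite E. change (pack4 (enc_sit s) 0 1 u0) with (pack4 (enc_sit s) (enc_sit []) (2 ^ length (@nil bool)) u0).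
  rewrite iter_fold. rewrite iter_fix. apply pack4_proj. apply pack4_proj.
Qed.

Lemma PR_runU U u0 : PR3 U -> PR1 (runU U u0).
Proof.
  intros HU. unfold runU. apply (PR1_c1 _ _ (PR_iter _ _ (PR_stepN U HU) (PR_pack4 _ _ _ _ PR1_id (PR1_const 0) (PR1_const 1) (PR1_const u0))) PR_p4).
Qed.

Open Scope R_scope.

Definition ya (y : nat) := unp1 y.
Definition yb (y : nat) := unp1 (unp2 y).
Definition yk (y : nat) := unp2 (unp2 y).
Definition val (y : nat) : R := (INR (ya y) - INR (yb y)) / (INR (yk y) + 1).

Lemma PR_ya : PR1 ya. Proof. exact PR_unp1. Qed.
Lemma PR_yb : PR1 yb. Proof. apply (PR1_c1 _ _ PR_unp2 PR_unp1). Qed.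
Lemma PR_yk : PR1 yk. Proof. apply (PR1_c1 _ _ PR_unp2 PR_unp2). Qed.

Lemma val_npair a b k : val (npair a (npair b k)) = (INR a - INR b) / (INR k + 1).
Proof. unfold val, ya, yb, yk. destruct (unp_npair a (npair b k)) as [-> ->].
  destruct (unp_npair b k) as [-> ->]. reflexivity. Qed.

Lemma oracle (q : list bool -> nat -> R) : recursive_rat q ->
  exists g : nat -> nat, PR1 g /\ forall d n, q d n = val (g (npair (enc_sit d) n)).
Proof.
  intros [c Hc].
  assert (H : forall x, exists y, eval c [x] y /\ forall d n, x = npair (enc_sit d) n -> q d n = val y).
  { intros x. destruct (npair_surj x) as [e [n0 Hx]]. destruct (enc_surj e) as [d0 Hd].
    subst. destruct (Hc d0 n0) as [a [b [k [He Hq]]]].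
    exists (npair a (npair b k)). split. exact He.
    intros d n Heq. apply npair_inj in Heq. destruct Heq as [E1 E2]. apply enc_inj in E1. subst.
    rewrite val_npair. exact Hq. }
  exists (fun x => proj1_sig (constructive_indefinite_description _ (H x))). split.
  - exists c. intros v Hv. destruct v as [|x [|]]; simpl in Hv; try lia.
    unfold a0. simpl. destruct (constructive_indefinite_description _ (H x)) as [y [Hy Hy2]]. exact Hy.
  - intros d n. destruct (constructive_indefinite_description _ (H (npair (enc_sit d) n))) as [y [Hy1 Hy]].
    simpl. apply Hy. reflexivity.
Qed.

Lemma output (F : nat -> nat) (A B K : list bool -> nat -> nat) : PR1 F ->
  (forall d n, F (npair (enc_sit d) n) = npair (A d n) (npair (B d n) (K d n))) ->
  recursive_rat (fun d n => (INR (A d n) - INR (B d n)) / (INR (K d n) + 1)).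
Proof.
  intros [c Hc] HF. exists c. intros d n. exists (A d n), (B d n), (K d n). split; auto.
  rewrite <- HF. apply (Hc [npair (enc_sit d) n]). reflexivity.
Qed.

Lemma div_lt_iff X K Y Q : 0 < K -> 0 < Q -> (X * Q < Y * K <-> X / K < Y / Q).
Proof.
  intros HK HQ. assert (EX : X = (X / K) * K) by (field; lra). assert (EY : Y = (Y / Q) * Q) by (field; lra).
  set (u := X / K) in *. set (v := Y / Q) in *. rewrite EX, EY. clearbody u v. clear EX EY.
  assert (HKQ : 0 < K * Q) by nra.
  replace (u * K * Q) with (u * (K * Q)) by ring. replace (v * Q * K) with (v * (K * Q)) by ring.
  split; intros H. apply (Rmult_lt_reg_r (K * Q)); auto. apply Rmult_lt_compat_r; auto.
Qed.

Lemma INR_pos_S k : 0 < INR k + 1.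
Proof. pose proof (pos_INR k). lra. Qed.

Lemma val_lt y P Q : (0 < Q)%nat ->
  ((Q * ya y < P * (yk y + 1) + Q * yb y)%nat <-> val y < INR P / INR Q).
Proof.
  intros HQ. unfold val. assert (HQ' : 0 < INR Q) by (apply lt_0_INR; auto).
  rewrite <- div_lt_iff; [|apply INR_pos_S|auto].
  split; intros H.
  - apply lt_INR in H. rewrite plus_INR, !mult_INR, plus_INR in H. simpl in H. lra.
  - apply INR_lt. rewrite plus_INR, !mult_INR, plus_INR. simpl. lra.
Qed.

Lemma val_gt y P Q : (0 < Q)%nat ->
  ((P * (yk y + 1) + Q * yb y < Q * ya y)%nat <-> INR P / INR Q < val y).
Proof.
  intros HQ. unfold val. assert (HQ' : 0 < INR Q) by (apply lt_0_INR; auto).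
  rewrite <- div_lt_iff; [|auto|apply INR_pos_S].
  split; intros H.
  - apply lt_INR in H. rewrite plus_INR, !mult_INR, plus_INR in H. simpl in H. lra.
  - apply INR_lt. rewrite plus_INR, !mult_INR, plus_INR. simpl. lra.
Qed.

Definition ltv (P Q y : nat) : bool := Nat.ltb (Q * ya y) (P * (yk y + 1) + Q * yb y).
Definition gtv (P Q y : nat) : bool := Nat.ltb (P * (yk y + 1) + Q * yb y) (Q * ya y).

Lemma ltv_spec P Q y : (0 < Q)%nat -> (ltv P Q y = true <-> val y < INR P / INR Q).
Proof. intros. unfold ltv. rewrite Nat.ltb_lt. apply val_lt; auto. Qed.
Lemma gtv_spec P Q y : (0 < Q)%nat -> (gtv P Q y = true <-> INR P / INR Q < val y).
Proof. intros. unfold gtv. rewrite Nat.ltb_lt. apply val_gt; auto. Qed.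

Lemma PR_ltv P Q : PR1 (fun y => b2n (ltv P Q y)).
Proof.
  unfold ltv. apply (PR1_c2 _ _ _ (PR1_c2 _ _ _ (PR1_const Q) PR_ya PR_mul)
    (PR1_c2 _ _ _ (PR1_c2 _ _ _ (PR1_const P) (PR1_c2 _ _ _ PR_yk (PR1_const 1) PR_add) PR_mul)
                  (PR1_c2 _ _ _ (PR1_const Q) PR_yb PR_mul) PR_add) PR_ltb).
Qed.
Lemma PR_gtv P Q : PR1 (fun y => b2n (gtv P Q y)).
Proof.
  unfold gtv. apply (PR1_c2 _ _ _ 
    (PR1_c2 _ _ _ (PR1_c2 _ _ _ (PR1_const P) (PR1_c2 _ _ _ PR_yk (PR1_const 1) PR_add) PR_mul)
                  (PR1_c2 _ _ _ (PR1_const Q) PR_yb PR_mul) PR_add)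
    (PR1_c2 _ _ _ (PR1_const Q) PR_ya PR_mul) PR_ltb).
Qed.

Open Scope R_scope.
Open Scope R_scope.

Lemma ue_ge a b f p : a <= p <= b -> p * f true + (1 - p) * f false <= upper_exp a b f.
Proof.
  intros [H1 H2]. unfold upper_exp.
  destruct (Rle_dec (a * f true + (1 - a) * f false) (b * f true + (1 - b) * f false)).
  - rewrite Rmax_right by auto.
    destruct (Rle_dec (f false) (f true)); nra.
  - rewrite Rmax_left by lra. destruct (Rle_dec (f false) (f true)); nra.
Qed.

Lemma ue_le a b f B : a * f true + (1 - a) * f false <= B -> b * f true + (1 - b) * f false <= B ->
  upper_exp a b f <= B.
Proof. intros. unfold upper_exp. apply Rmax_lub; auto. Qed.

Lemma ue_point p f : upper_exp p p f = p * f true + (1 - p) * f false.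
Proof. unfold upper_exp. apply Rmax_left. lra. Qed.

Lemma ue_sub a b a' b' f : a' <= a -> a <= b -> b <= b' -> upper_exp a b f <= upper_exp a' b' f.
Proof. intros. apply ue_le; apply ue_ge; lra. Qed.

Lemma ue_scale a b c f : 0 <= c -> upper_exp a b (fun x => c * f x) = c * upper_exp a b f.
Proof. intros. unfold upper_exp. rewrite <- RmaxRmult by auto. f_equal; ring. Qed.

Lemma ue_ext a b f g : (forall x, f x = g x) -> upper_exp a b f = upper_exp a b g.
Proof. intros H. unfold upper_exp. rewrite !H. reflexivity. Qed.

Lemma test_sub a b a' b' T : a' <= a -> a <= b -> b <= b' ->
  test_supermartingale (fun _ => a') (fun _ => b') T -> test_supermartingale (fun _ => a) (fun _ => b) T.
Proof.
  intros H1 H2 H3 [T0 [Tp Ts]]. split; [|split]; auto. intros s.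
  eapply Rle_trans; [|apply (Ts s)]. apply ue_sub; auto.
Qed.

Lemma ML_up a b a' b' w : a' <= a -> a <= b -> b <= b' -> ML_random_I a b w -> ML_random_I a' b' w.
Proof.
  intros H1 H2 H3 HR [T [HT1 [HT2 HT3]]]. apply HR. exists T. split; [auto|split; [|auto]].
  eapply test_sub; eauto.
Qed.

Lemma prefix_S w n : prefix w (S n) = prefix w n ++ [w n].
Proof. unfold prefix. rewrite seq_S, map_app. reflexivity. Qed.

Lemma prefix_len w n : length (prefix w n) = n.
Proof. unfold prefix. rewrite length_map, length_seq. reflexivity. Qed.

Lemma mult_test (lo hi : list bool -> R) (T : list bool -> R) (F : list bool -> bool -> R) :
  T [] = 1 -> (forall s x, T (s ++ [x]) = T s * F s x) -> (forall s x, 0 <= F s x) ->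
  (forall s, upper_exp (lo s) (hi s) (fun x => F s x - 1) <= 0) ->
  test_supermartingale lo hi T.
Proof.
  intros H0 HS HF HU.
  assert (Hp : forall s, 0 <= T s).
  { intros s. induction s as [|s x IH] using rev_ind. lra. rewrite HS. apply Rmult_le_pos; auto. }
  split; [|split]; auto. intros s.
  rewrite (ue_ext _ _ _ (fun x => T s * (F s x - 1))) by (intros; rewrite HS; ring).
  rewrite ue_scale by auto. specialize (HU s). specialize (Hp s). nra.
Qed.

Lemma bernoulli_ineq (e : R) (n : nat) : 0 <= e -> 1 + INR n * e <= (1 + e) ^ n.
Proof.
  intros He. induction n. simpl. lra. rewrite S_INR. simpl.
  pose proof (pos_INR n). nra.
Qed.

Fixpoint cnt (D : list bool -> bool) (w : nat -> bool) (n : nat) : nat :=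
  match n with 0 => 0%nat | S m => (cnt D w m + (if D (prefix w m) then 1 else 0))%nat end.

Lemma cnt_unbounded D w : (forall N, exists n, (N <= n)%nat /\ D (prefix w n) = true) ->
  forall K, exists n, (K <= cnt D w n)%nat.
Proof.
  intros H K. induction K. exists 0%nat. lia.
  destruct IHK as [n Hn]. destruct (H n) as [m [Hm HD]].
  exists (S m). simpl. rewrite HD.
  assert (forall a b, (a <= b)%nat -> (cnt D w a <= cnt D w b)%nat).
  { intros a b Hab. induction Hab. lia. simpl. lia. }
  specialize (H0 n m Hm). lia.
Qed.

Lemma product_core (T1 T2 : list bool -> R) (D : list bool -> bool) (w : nat -> bool) (eta : R) :
  0 < eta -> T1 [] = 1 -> T2 [] = 1 -> (forall s, 0 <= T1 s) -> (forall s, 0 <= T2 s) ->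
  (forall n, T1 (prefix w (S n)) * T2 (prefix w (S n)) =
             T1 (prefix w n) * T2 (prefix w n) * (if D (prefix w n) then 1 + eta else 1)) ->
  (forall N, exists n, (N <= n)%nat /\ D (prefix w n) = true) ->
  (forall (M : R) (N : nat), exists n, (N <= n)%nat /\ M < T1 (prefix w n)) \/
  (forall (M : R) (N : nat), exists n, (N <= n)%nat /\ M < T2 (prefix w n)).
Proof.
  intros He H1 H2 P1 P2 HS HD.
  assert (Hprod : forall n, (1 + eta) ^ (cnt D w n) <= T1 (prefix w n) * T2 (prefix w n)).
  { induction n. simpl. unfold prefix. simpl. rewrite H1, H2. lra.
    rewrite HS. simpl. destruct (D (prefix w n)).
    - rewrite pow_add. simpl. nra.
    - rewrite Nat.add_0_r. lra. }
  assert (Hmono : forall a b, (a <= b)%nat -> (cnt D w a <= cnt D w b)%nat).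
  { intros a b Hab. induction Hab. lia. simpl. lia. }
  destruct (classic (forall (M : R) (N : nat), exists n, (N <= n)%nat /\ M < T1 (prefix w n))) as [A|A]; [left; auto|].
  destruct (classic (forall (M : R) (N : nat), exists n, (N <= n)%nat /\ M < T2 (prefix w n))) as [B|B]; [right; auto|].
  exfalso.
  apply not_all_ex_not in A. destruct A as [M1 A]. apply not_all_ex_not in A. destruct A as [N1 A].
  apply not_all_ex_not in B. destruct B as [M2 B]. apply not_all_ex_not in B. destruct B as [N2 B].
  assert (A' : forall n, (N1 <= n)%nat -> T1 (prefix w n) <= M1).
  { intros n Hn. destruct (Rle_dec (T1 (prefix w n)) M1); auto. exfalso. apply A. exists n. split; auto. lra. }
  assert (B' : forall n, (N2 <= n)%nat -> T2 (prefix w n) <= M2).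
  { intros n Hn. destruct (Rle_dec (T2 (prefix w n)) M2); auto. exfalso. apply B. exists n. split; auto. lra. }
  assert (HM1 : 0 <= M1) by (pose proof (A' N1 (le_n _)); pose proof (P1 (prefix w N1)); lra).
  assert (HM2 : 0 <= M2) by (pose proof (B' N2 (le_n _)); pose proof (P2 (prefix w N2)); lra).
  destruct (archimed (M1 * M2 / eta)) as [Hup _].
  assert (Hz : (0 <= up (M1 * M2 / eta))%Z).
  { apply le_IZR. assert (0 <= M1 * M2 / eta) by (apply Rmult_le_pos; [nra|left; apply Rinv_0_lt_compat; auto]). lra. }
  destruct (cnt_unbounded D w HD (Z.to_nat (up (M1 * M2 / eta)))) as [n Hn].
  set (m := Nat.max n (Nat.max N1 N2)).
  pose proof (Hmono n m ltac:(lia)).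
  pose proof (Hprod m). pose proof (bernoulli_ineq eta (cnt D w m) ltac:(lra)).
  pose proof (A' m ltac:(lia)). pose proof (B' m ltac:(lia)).
  pose proof (P1 (prefix w m)). pose proof (P2 (prefix w m)).
  assert (T1 (prefix w m) * T2 (prefix w m) <= M1 * M2) by (apply Rmult_le_compat; auto).
  assert (IZR (up (M1 * M2 / eta)) <= INR (cnt D w m)).
  { rewrite <- (Znat.Z2Nat.id _ Hz). rewrite <- INR_IZR_INZ. apply le_INR. lia. }
  assert (M1 * M2 / eta * eta = M1 * M2) by (field; lra).
  assert (M1 * M2 / eta * eta < INR (cnt D w m) * eta) by (apply Rmult_lt_compat_r; lra).
  lra.
Qed.

Open Scope R_scope.
Open Scope R_scope.

Definition Dn (g : nat -> nat) (k : nat) (dir : bool) (P Q : nat) (p : nat) : bool :=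
  (if dir then ltv P Q else gtv P Q) (g (npair p k)).

Lemma PR_Dn g k dir P Q : PR1 g -> PR1 (fun p => b2n (Dn g k dir P Q p)).
Proof.
  intros Hg. unfold Dn.
  assert (H : PR1 (fun p => g (npair p k))) by apply (PR1_c1 _ _ (PR1_c2 _ _ _ PR1_id (PR1_const k) PR_npair) Hg).
  destruct dir; [apply (PR1_c1 _ _ H (PR_ltv P Q))|apply (PR1_c1 _ _ H (PR_gtv P Q))].
Qed.

Definition UM g k dir P Q (n0 m0 n1 m1 : nat) (u p bit : nat) : nat :=
  ifz (b2n (Dn g k dir P Q p)) u (npair (unp1 u * ifz bit n0 n1) (unp2 u * ifz bit m0 m1))%nat.

Lemma PR_UM g k dir P Q n0 m0 n1 m1 : PR1 g -> PR3 (UM g k dir P Q n0 m0 n1 m1).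
Proof.
  intros Hg. unfold UM.
  apply (PR3_c3 _ _ _ _ (PR3_c1 _ _ PR3_2 (PR_Dn g k dir P Q Hg)) PR3_1); [|apply PR_ifz].
  apply (PR3_c2 _ _ _ (PR3_c2 _ _ _ (PR3_c1 _ _ PR3_1 PR_unp1) (PR3_c3 _ _ _ _ PR3_3 (PR3_const n0) (PR3_const n1) PR_ifz) PR_mul)
    (PR3_c2 _ _ _ (PR3_c1 _ _ PR3_1 PR_unp2) (PR3_c3 _ _ _ _ PR3_3 (PR3_const m0) (PR3_const m1) PR_ifz) PR_mul) PR_npair).
Qed.

Definition stM g k dir P Q n0 m0 n1 m1 (s : list bool) : nat :=
  ufoldL (UM g k dir P Q n0 m0 n1 m1) [] s (npair 1 1).

Definition TM g k dir P Q n0 m0 n1 m1 (s : list bool) : R :=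
  INR (unp1 (stM g k dir P Q n0 m0 n1 m1 s)) / INR (unp2 (stM g k dir P Q n0 m0 n1 m1 s)).

Lemma stM_snoc g k dir P Q n0 m0 n1 m1 s x :
  stM g k dir P Q n0 m0 n1 m1 (s ++ [x]) = UM g k dir P Q n0 m0 n1 m1 (stM g k dir P Q n0 m0 n1 m1 s) (enc_sit s) (b2n x).
Proof. unfold stM. rewrite ufoldL_snoc. reflexivity. Qed.

Lemma stM_den g k dir P Q n0 m0 n1 m1 s : (1 <= m0)%nat -> (1 <= m1)%nat ->
  (1 <= unp2 (stM g k dir P Q n0 m0 n1 m1 s))%nat.
Proof.
  intros H0 H1. induction s as [|x s IH] using rev_ind.
  - unfold stM. simpl. destruct (unp_npair 1 1). lia.
  - rewrite stM_snoc. unfold UM, ifz. destruct (b2n _ =? 0)%nat; auto.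
    rewrite (proj2 (unp_npair _ _)). destruct x; simpl; nia.
Qed.

Lemma TM_nil g k dir P Q n0 m0 n1 m1 : TM g k dir P Q n0 m0 n1 m1 [] = 1.
Proof. unfold TM, stM. cbn [ufoldL]. rewrite (proj1 (unp_npair _ _)), (proj2 (unp_npair _ _)). simpl. lra. Qed.

Lemma TM_snoc g k dir P Q n0 m0 n1 m1 s x : (1 <= m0)%nat -> (1 <= m1)%nat ->
  TM g k dir P Q n0 m0 n1 m1 (s ++ [x]) = TM g k dir P Q n0 m0 n1 m1 s *
    (if Dn g k dir P Q (enc_sit s) then (if x then INR n1 / INR m1 else INR n0 / INR m0) else 1).
Proof.
  intros H0 H1. pose proof (stM_den g k dir P Q n0 m0 n1 m1 s H0 H1) as Hd.
  unfold TM. rewrite stM_snoc. unfold UM, ifz, b2n at 1.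
  destruct (Dn g k dir P Q (enc_sit s)); simpl.
  - rewrite (proj1 (unp_npair _ _)), (proj2 (unp_npair _ _)).
    assert (0 < INR (unp2 (stM g k dir P Q n0 m0 n1 m1 s))) by (apply lt_0_INR; lia).
    unfold ifz. destruct x; simpl; rewrite !mult_INR; field; split; try lra; apply not_0_INR; lia.
  - lra.
Qed.



Lemma TM_lsc g k dir P Q n0 m0 n1 m1 : PR1 g -> (1 <= m0)%nat -> (1 <= m1)%nat ->
  lower_semicomputable (TM g k dir P Q n0 m0 n1 m1).
Proof.
  intros Hg H0 H1.
  set (U := UM g k dir P Q n0 m0 n1 m1).
  set (F := fun x => npair (unp1 (runU U (npair 1 1) (unp1 x))) (npair 0 (unp2 (runU U (npair 1 1) (unp1 x)) - 1))%nat).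
  assert (HF : PR1 F).
  { assert (HR : PR1 (fun x => runU U (npair 1 1) (unp1 x))) by apply (PR1_c1 _ _ PR_unp1 (PR_runU U _ (PR_UM g k dir P Q n0 m0 n1 m1 Hg))).
    apply (PR1_c2 _ _ _ (PR1_c1 _ _ HR PR_unp1) (PR1_c2 _ _ _ (PR1_const 0) (PR1_c2 _ _ _ (PR1_c1 _ _ HR PR_unp2) (PR1_const 1) PR_sub) PR_npair) PR_npair). }
  pose proof (output F (fun d n => unp1 (stM g k dir P Q n0 m0 n1 m1 d)) (fun d n => 0%nat)
     (fun d n => unp2 (stM g k dir P Q n0 m0 n1 m1 d) - 1)%nat HF) as HO.
  assert (HE : forall d n, F (npair (enc_sit d) n) = npair (unp1 (stM g k dir P Q n0 m0 n1 m1 d))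
            (npair 0 (unp2 (stM g k dir P Q n0 m0 n1 m1 d) - 1))).
  { intros d n. unfold F. destruct (unp_npair (enc_sit d) n) as [-> _]. rewrite runU_enc. reflexivity. }
  specialize (HO HE).
  exists (fun d n => (INR (unp1 (stM g k dir P Q n0 m0 n1 m1 d)) - INR 0) / (INR (unp2 (stM g k dir P Q n0 m0 n1 m1 d) - 1) + 1)).
  split; [exact HO|split].
  - intros; lra.
  - intros d. replace (TM g k dir P Q n0 m0 n1 m1 d) with ((INR (unp1 (stM g k dir P Q n0 m0 n1 m1 d)) - INR 0) / (INR (unp2 (stM g k dir P Q n0 m0 n1 m1 d) - 1) + 1)).
    intros e He. exists 0%nat. intros. unfold R_dist. rewrite Rminus_diag, Rabs_R0. auto.
    unfold TM. pose proof (stM_den g k dir P Q n0 m0 n1 m1 d H0 H1).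
    rewrite minus_INR by lia. simpl. f_equal; lra.
Qed.

Open Scope R_scope.
Open Scope R_scope.

Lemma ineq_core (c e p : R) : 0 < e -> e <= 1/8 -> 4 * e < c -> c <= 1 -> 0 <= p -> p <= c - e ->
  p * ((1 + e/2 * e/4) / (1 - e/2 * (1 - c) / c) - 1) + (1 - p) * ((1 + e/2 * e/4) / (1 + e/2) - 1) <= 0.
Proof.
  intros He He8 Hc Hc1 Hp Hpc.
  set (l := e/2). set (h := l * e / 4).
  replace (e / 2 * e / 4) with h by (unfold h, l; field).
  set (m := l * (1 - c) / c).
  assert (Hcm : c * m = l * (1 - c)) by (unfold m; field; lra).
  assert (Hm0 : 0 <= m) by (unfold m; apply Rmult_le_pos; [unfold l; nra|left; apply Rinv_0_lt_compat; lra]).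
  assert (Hm1 : m <= 1/8).
  { assert (c * m <= c * (1/8)) by (rewrite Hcm; unfold l; nra). nra. }
  assert (Hl : l = e/2) by reflexivity.
  assert (Hh : h = l * e / 4) by reflexivity.
  assert (K : l - m * l - p * (l + m) >= e * l).
  { assert (p * (l + m) <= (c - e) * (l + m)) by (apply Rmult_le_compat_r; unfold l in *; lra).
    assert (E1 : (c - e) * (l + m) = c * l + c * m - e * l - e * m) by ring.
    assert (E2 : m * (e - l) >= 0) by (apply Rle_ge, Rmult_le_pos; unfold l; lra).
    assert (E3 : m * (e - l) = m * e - m * l) by ring.
    rewrite Hcm in E1. assert (E4 : l * (1 - c) = l - c * l) by ring. assert (e * m = m * e) by ring. lra. }
  assert (Hh0 : 0 <= h) by (rewrite Hh, Hl; assert (0 <= e * e) by nra; lra).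
  assert (Hl1 : 0 < l <= 1/16) by (rewrite Hl; lra).
  assert (K2 : h * (1 - m) * (1 + l) <= e * l).
  { assert (h * (1 - m) * (1 + l) <= h * (1 + l)).
    { replace (h * (1 - m) * (1 + l)) with (h * (1 + l) - m * (h * (1 + l))) by ring.
      assert (0 <= m * (h * (1 + l))) by (apply Rmult_le_pos; [lra|apply Rmult_le_pos; lra]). lra. }
    assert (h * (1 + l) <= h * 2) by (apply Rmult_le_compat_l; lra).
    assert (e * l = l * e) by ring. assert (0 <= l * e) by (apply Rmult_le_pos; lra). lra. }
  assert (X : (1 - m + p * (l + m)) * (1 + h) <= (1 - m) * (1 + l)).
  { assert (1 - m + p * (l + m) <= (1 - m) * (1 + l) * (1 - h)) by nra.
    assert (0 <= h) by (rewrite Hh, Hl; nra).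
    assert (0 <= 1 - h) by (rewrite Hh, Hl; nra).
    nra. }
  assert (D1 : 0 < 1 - m) by lra. assert (D2 : 0 < 1 + l) by (unfold l; lra).
  replace (p * ((1 + h) / (1 - m) - 1) + (1 - p) * ((1 + h) / (1 + l) - 1))
    with (((1 - m + p * (l + m)) * (1 + h) - (1 - m) * (1 + l)) / ((1 - m) * (1 + l))) by (field; lra).
  unfold Rdiv. rewrite <- (Rmult_0_l (/ ((1 - m) * (1 + l)))). apply Rmult_le_compat_r.
  left. apply Rinv_0_lt_compat. nra. lra.
Qed.

Open Scope R_scope.
Open Scope R_scope.

Definition fav_n (E : nat) := (2 * E + 1)%nat.
Definition fav_m (E : nat) := (2 * E)%nat.
Definition unf_n (E Pc Q : nat) := (2 * E * Pc + Pc - Q)%nat.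
Definition unf_m (E Pc : nat) := (2 * E * Pc)%nat.
Definition al_n (E : nat) := ((8 * E * E + 1) * (2 * E))%nat.
Definition al_m (E : nat) := (8 * E * E * (2 * E + 1))%nat.
Definition be_n (E Pc : nat) := ((8 * E * E + 1) * (2 * E * Pc))%nat.
Definition be_m (E Pc Q : nat) := (8 * E * E * (2 * E * Pc + Pc - Q))%nat.

Lemma INR_ne0 n : (0 < n)%nat -> INR n <> 0.
Proof. intros. apply not_0_INR. lia. Qed.

Ltac inrs_in H := repeat (rewrite mult_INR in H || rewrite plus_INR in H); simpl INR in H.
Ltac fs := field; repeat split; try assumption; try lra.
Ltac inrs := repeat (rewrite mult_INR || rewrite plus_INR); simpl INR.

Lemma fav_val E : (1 <= E)%nat -> INR (fav_n E) / INR (fav_m E) = 1 + (1 / INR E) / 2.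
Proof. intros. unfold fav_n, fav_m. pose proof (INR_ne0 E ltac:(lia)). inrs. fs. Qed.

Lemma unf_val E Pc Q : (1 <= E)%nat -> (0 < Q)%nat -> (0 < Pc)%nat -> (Q <= 2 * E * Pc + Pc)%nat ->
  INR (unf_n E Pc Q) / INR (unf_m E Pc) = 1 - (1 / INR E) / 2 * (1 - INR Pc / INR Q) / (INR Pc / INR Q).
Proof.
  intros. unfold unf_n, unf_m. pose proof (INR_ne0 E ltac:(lia)). pose proof (INR_ne0 Q ltac:(lia)).
  pose proof (INR_ne0 Pc ltac:(lia)). rewrite minus_INR by lia. inrs. fs.
Qed.

Lemma al_val E : (1 <= E)%nat -> INR (al_n E) / INR (al_m E) =
  (1 + (1 / INR E) / 2 * (1 / INR E) / 4) / (1 + (1 / INR E) / 2).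
Proof.
  intros. unfold al_n, al_m. pose proof (INR_ne0 E ltac:(lia)). pose proof (pos_INR E).
  inrs. fs.
Qed.

Lemma be_val E Pc Q : (1 <= E)%nat -> (0 < Q)%nat -> (0 < Pc)%nat -> (Q < 2 * E * Pc + Pc)%nat ->
  INR (be_n E Pc) / INR (be_m E Pc Q) =
  (1 + (1 / INR E) / 2 * (1 / INR E) / 4) / (1 - (1 / INR E) / 2 * (1 - INR Pc / INR Q) / (INR Pc / INR Q)).
Proof.
  intros. unfold be_n, be_m. pose proof (INR_ne0 E ltac:(lia)). pose proof (INR_ne0 Q ltac:(lia)).
  pose proof (INR_ne0 Pc ltac:(lia)). pose proof (pos_INR E).
  assert (HX : INR Q < INR (2 * E * Pc + Pc)) by (apply lt_INR; lia).
  inrs. rewrite minus_INR by lia. inrs. inrs_in HX. fs.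
  all: try (intro; nra).
Qed.

Lemma A_gen phi w g k dir Pt Qt E Pc Q (flip : bool) c d :
  forecasting_system phi phi -> PR1 g -> (8 <= E)%nat -> (0 < Q)%nat -> (Pc <= Q)%nat -> (4 * Q < Pc * E)%nat ->
  (forall s, Dn g k dir Pt Qt (enc_sit s) = true ->
     (if flip then 1 - phi s else phi s) <= INR Pc / INR Q - 1 / INR E) ->
  (forall N, exists n, (N <= n)%nat /\ Dn g k dir Pt Qt (enc_sit (prefix w n)) = true) ->
  c <= d ->
  (if flip then 0 <= c /\ d <= 1 - INR Pc / INR Q else INR Pc / INR Q <= c /\ d <= 1) ->
  ML_random phi phi w -> ML_random_I c d w -> False.
Proof.
  intros Hfs Hg HE HQ HPQ H4 HD Hinf Hcd Hint Hrand1 Hrand2.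
  assert (HE' : 8 <= INR E) by (replace 8 with (INR 8) by (simpl; lra); apply le_INR; lia).
  assert (HPc : (0 < Pc)%nat) by (destruct Pc; lia).
  set (e := 1 / INR E).
  assert (He : 0 < e) by (unfold e; apply Rdiv_lt_0_compat; lra).
  assert (He8 : e <= 1/8) by (unfold e; apply Rmult_le_reg_r with (INR E); [lra|]; unfold Rdiv; rewrite Rmult_assoc, Rinv_l by lra; lra).
  set (C := INR Pc / INR Q).
  assert (HQr : 0 < INR Q) by (apply lt_0_INR; lia).
  assert (HPr : 0 < INR Pc) by (apply lt_0_INR; lia).
  assert (HC1 : C <= 1) by (unfold C; apply Rmult_le_reg_r with (INR Q); [lra|]; unfold Rdiv; rewrite Rmult_assoc, Rinv_l by lra; rewrite Rmult_1_r, Rmult_1_l; apply le_INR; lia).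
  assert (HC4 : 4 * e < C).
  { unfold e, C. replace (4 * (1 / INR E)) with (INR 4 / INR E) by (simpl; field; lra).
    rewrite <- div_lt_iff by lra. rewrite <- !mult_INR. apply lt_INR. lia. }
  set (FAV := 1 + e / 2). set (UNF := 1 - e / 2 * (1 - C) / C).
  set (h := e / 2 * e / 4).
  set (AL := (1 + h) / FAV). set (BE := (1 + h) / UNF).
  assert (HUNF : 7/8 <= UNF).
  { unfold UNF. assert (e / 2 * (1 - C) / C <= 1/8); [|lra].
    apply Rmult_le_reg_r with C; [lra|]. unfold Rdiv at 1. rewrite Rmult_assoc, Rinv_l by lra. nra. }
  assert (HFAV : 1 <= FAV) by (unfold FAV; lra).
  assert (Hh : 0 < h) by (unfold h; nra).
  assert (Hlt : (Q < 2 * E * Pc + Pc)%nat) by nia.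
  set (n0 := if flip then unf_n E Pc Q else fav_n E). set (m0 := if flip then unf_m E Pc else fav_m E).
  set (n1 := if flip then fav_n E else unf_n E Pc Q). set (m1 := if flip then fav_m E else unf_m E Pc).
  set (n0' := if flip then be_n E Pc else al_n E). set (m0' := if flip then be_m E Pc Q else al_m E).
  set (n1' := if flip then al_n E else be_n E Pc). set (m1' := if flip then al_m E else be_m E Pc Q).
  assert (Hm : (1 <= m0 /\ 1 <= m1 /\ 1 <= m0' /\ 1 <= m1')%nat).
  { unfold m0, m1, m0', m1', fav_m, unf_m, al_m, be_m. destruct flip; repeat split; nia. }
  destruct Hm as [Hm0 [Hm1 [Hm0' Hm1']]].
  assert (Hr0 : INR n0 / INR m0 = if flip then UNF else FAV).
  { unfold n0, m0; destruct flip; [apply unf_val|apply fav_val]; lia. }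
  assert (Hr1 : INR n1 / INR m1 = if flip then FAV else UNF).
  { unfold n1, m1; destruct flip; [apply fav_val|apply unf_val]; lia. }
  assert (Hr0' : INR n0' / INR m0' = if flip then BE else AL).
  { unfold n0', m0'; destruct flip; [apply be_val|apply al_val]; lia. }
  assert (Hr1' : INR n1' / INR m1' = if flip then AL else BE).
  { unfold n1', m1'; destruct flip; [apply al_val|apply be_val]; lia. }
  set (D := fun s => Dn g k dir Pt Qt (enc_sit s)).
  set (TI := TM g k dir Pt Qt n0 m0 n1 m1).
  set (TP := TM g k dir Pt Qt n0' m0' n1' m1').
  set (FI := fun s (x : bool) => if D s then (if x then (if flip then FAV else UNF) else (if flip then UNF else FAV)) else 1).
  set (FP := fun s (x : bool) => if D s then (if x then (if flip then AL else BE) else (if flip then BE else AL)) else 1).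
  assert (TIs : forall s x, TI (s ++ [x]) = TI s * FI s x).
  { intros s x. unfold TI. rewrite TM_snoc by auto. unfold FI, D. destruct (Dn _ _ _ _ _ _); [|reflexivity].
    destruct x; [rewrite Hr1|rewrite Hr0]; reflexivity. }
  assert (TPs : forall s x, TP (s ++ [x]) = TP s * FP s x).
  { intros s x. unfold TP. rewrite TM_snoc by auto. unfold FP, D. destruct (Dn _ _ _ _ _ _); [|reflexivity].
    destruct x; [rewrite Hr1'|rewrite Hr0']; reflexivity. }
  assert (HAL : 0 < AL) by (unfold AL; apply Rdiv_lt_0_compat; lra).
  assert (HBE : 0 < BE) by (unfold BE; apply Rdiv_lt_0_compat; lra).
  assert (TI_test : test_supermartingale (fun _ => if flip then 0 else C) (fun _ => if flip then 1 - C else 1) TI).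
  { apply (mult_test _ _ _ FI). apply TM_nil. exact TIs.
    - intros s x. unfold FI. destruct (D s), x, flip; lra.
    - intros s. unfold FI. destruct (D s).
      + assert (EC : C * (e / 2 * (1 - C) / C) = e / 2 * (1 - C)) by (field; lra).
        assert (0 <= e / 2 * (1 - C) / C) by (apply Rmult_le_pos; [nra|left; apply Rinv_0_lt_compat; lra]).
        destruct flip; apply ue_le; unfold UNF, FAV; nra.
      + apply ue_le; lra. }
  assert (TI_test2 : test_supermartingale (fun _ => c) (fun _ => d) TI).
  { apply (test_sub c d (if flip then 0 else C) (if flip then 1 - C else 1)); [| | |exact TI_test];
    destruct flip; unfold C; lra. }
  assert (TP_test : test_supermartingale phi phi TP).
  { apply (mult_test _ _ _ FP). apply TM_nil. exact TPs.
    - intros s x. unfold FP. destruct (D s), x, flip; lra.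
    - intros s. rewrite ue_point. unfold FP. destruct (D s) eqn:ED; [|lra].
      pose proof (HD s ED) as Hp. destruct (Hfs s) as [Hp0 [_ Hp1]].
      destruct flip.
      + pose proof (ineq_core C e (1 - phi s) He He8 HC4 HC1 ltac:(lra) ltac:(unfold C, e; lra)).
        unfold AL, BE, UNF, FAV, h. lra.
      + pose proof (ineq_core C e (phi s) He He8 HC4 HC1 ltac:(lra) ltac:(unfold C, e; lra)).
        unfold AL, BE, UNF, FAV, h. lra. }
  assert (Hprod : forall n, TI (prefix w (S n)) * TP (prefix w (S n)) =
             TI (prefix w n) * TP (prefix w n) * (if D (prefix w n) then 1 + h else 1)).
  { intros n. rewrite prefix_S, TIs, TPs. unfold FI, FP. destruct (D (prefix w n)).
    - assert (FAV * AL = 1 + h) by (unfold AL; field; lra).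
      assert (UNF * BE = 1 + h) by (unfold BE; field; lra).
      destruct (w n), flip; nra.
    - ring. }
  pose proof TI_test2 as [TI0 [TIp _]]. pose proof TP_test as [TP0 [TPp _]].
  destruct (product_core TI TP D w h Hh TI0 TP0 TIp TPp Hprod Hinf) as [U|U].
  - apply Hrand2. exists TI. split; [apply TM_lsc; auto|split; auto].
  - apply Hrand1. exists TP. split; [apply TM_lsc; auto|split; auto].
Qed.

Open Scope R_scope.
Open Scope R_scope.

Lemma nat_above (x : R) : exists n : nat, x < INR n.
Proof.
  destruct (archimed x) as [H _]. destruct (Z_lt_le_dec 0 (up x)) as [Hz|Hz].
  - exists (Z.to_nat (up x)). rewrite INR_IZR_INZ, Znat.Z2Nat.id by lia. exact H.
  - exists 0%nat. simpl. apply IZR_le in Hz. lra.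
Qed.

Lemma rat_between x y : 0 <= x -> x < y -> exists P Q : nat, (0 < Q)%nat /\ x < INR P / INR Q < y.
Proof.
  intros Hx Hxy. destruct (nat_above (1 / (y - x))) as [Q HQ].
  assert (HQ0 : 0 < INR Q) by (assert (0 < 1 / (y - x)) by (apply Rdiv_lt_0_compat; lra); lra).
  assert (HQn : (0 < Q)%nat) by (apply INR_lt; simpl; lra).
  destruct (archimed (x * INR Q)) as [H1 H2].
  assert (Hz : (0 <= up (x * INR Q))%Z) by (apply le_IZR; assert (0 <= x * INR Q) by nra; lra).
  exists (Z.to_nat (up (x * INR Q))), Q. split; auto.
  rewrite INR_IZR_INZ, Znat.Z2Nat.id by lia. split.
  - apply Rmult_lt_reg_r with (INR Q); auto. unfold Rdiv. rewrite Rmult_assoc, Rinv_l by lra. lra.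
  - apply Rmult_lt_reg_r with (INR Q); auto. unfold Rdiv. rewrite Rmult_assoc, Rinv_l by lra.
    assert (1 < (y - x) * INR Q).
    { apply Rmult_lt_reg_l with (1 / (y - x)). apply Rdiv_lt_0_compat; lra.
      replace (1 / (y - x) * ((y - x) * INR Q)) with (INR Q) by (field; lra). lra. }
    nra.
Qed.

Lemma half_pow_le E : (1 <= E)%nat -> (/ 2) ^ E <= 1 / INR E.
Proof.
  intros HE. assert (Hn : (E <= 2 ^ E)%nat).
  { clear HE. induction E. simpl. lia. rewrite Nat.pow_succ_r'. destruct E; simpl in *; lia. }
  rewrite pow_inv. unfold Rdiv. rewrite Rmult_1_l. apply Rinv_le_contravar.
  apply lt_0_INR; lia. replace 2 with (INR 2) by (simpl; lra). rewrite <- pow_INR. apply le_INR. exact Hn.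
Qed.

Lemma comp_oracle phi : computable phi -> exists g, PR1 g /\ forall d n, Rabs (phi d - val (g (npair (enc_sit d) n))) < (/ 2) ^ n.
Proof.
  intros [q [Hq Hb]]. destruct (oracle q Hq) as [g [Hg Hgq]]. exists g. split; auto.
  intros d n. rewrite <- Hgq. auto.
Qed.

Lemma get_E (delta : R) : 0 < delta -> exists E : nat, (8 <= E)%nat /\ 1 / INR E < delta / 8.
Proof.
  intros Hd. destruct (nat_above (8 / delta)) as [n Hn]. exists (Nat.max 8 n). split. lia.
  assert (INR n <= INR (Nat.max 8 n)) by (apply le_INR; lia).
  assert (0 < 8 / delta) by (apply Rdiv_lt_0_compat; lra).
  set (m := INR (Nat.max 8 n)) in *.
  assert (0 < m) by lra.
  apply Rmult_lt_reg_r with (m * 8 / delta). apply Rdiv_lt_0_compat; lra.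
  replace (1 / m * (m * 8 / delta)) with (8 / delta) by (field; lra).
  replace (delta / 8 * (m * 8 / delta)) with m by (field; lra). lra.
Qed.

Lemma A_low phi w c d delta : forecasting_system phi phi -> computable phi -> ML_random phi phi w ->
  c <= d -> d <= 1 -> ML_random_I c d w -> 0 < delta ->
  ~ (forall N, exists n, (N <= n)%nat /\ phi (prefix w n) < c - delta).
Proof.
  intros Hfs Hc Hr Hcd Hd1 HrI Hdel Hinf.
  destruct (comp_oracle phi Hc) as [g [Hg Hgb]].
  assert (Hcpos : delta < c).
  { destruct (Hinf 0%nat) as [n [_ Hn]]. destruct (Hfs (prefix w n)). lra. }
  destruct (get_E delta Hdel) as [E [HE He]].
  set (e := 1 / INR E) in *.
  assert (HE' : 8 <= INR E) by (replace 8 with (INR 8) by (simpl; lra); apply le_INR; lia).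
  assert (He0 : 0 < e) by (unfold e; apply Rdiv_lt_0_compat; lra).
  destruct (rat_between (c - delta / 2) c ltac:(lra) ltac:(lra)) as [P [Q [HQ [HP1 HP2]]]].
  assert (HQr : 0 < INR Q) by (apply lt_0_INR; lia).
  assert (HPQ : (P <= Q)%nat).
  { apply INR_le. apply Rmult_le_reg_r with (/ INR Q). apply Rinv_0_lt_compat; lra.
    rewrite Rinv_r by lra. unfold Rdiv in HP2. lra. }
  assert (H4 : (4 * Q < P * E)%nat).
  { apply INR_lt. rewrite !mult_INR. simpl (INR 4).
    assert (4 * e < INR P / INR Q) by lra. unfold e in H. replace (4 * (1 / INR E)) with (4 / INR E) in H by (field; lra).
    apply div_lt_iff in H; [|lra|lra]. replace (1 + 1 + 1 + 1) with 4 by ring. lra. }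
  set (Pt := (P * E - 2 * Q)%nat). set (Qt := (Q * E)%nat).
  assert (HQt : (0 < Qt)%nat) by (unfold Qt; nia).
  assert (Hthr : INR Pt / INR Qt = INR P / INR Q - 2 * e).
  { unfold Pt, Qt, e. rewrite minus_INR by nia. rewrite !mult_INR. simpl (INR 2). field. lra. }
  assert (Hpow : (/ 2) ^ E <= e) by (apply half_pow_le; lia).
  apply (A_gen phi w g E true Pt Qt E P Q false c d Hfs Hg HE HQ HPQ H4); auto.
  - intros s HDs. unfold Dn in HDs. apply ltv_spec in HDs; auto. rewrite Hthr in HDs.
    specialize (Hgb s E). apply Rabs_def2 in Hgb. fold e. lra.
  - intros N. destruct (Hinf N) as [n [Hn Hlt]]. exists n. split; auto.
    unfold Dn. apply ltv_spec; auto. rewrite Hthr.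
    specialize (Hgb (prefix w n) E). apply Rabs_def2 in Hgb. lra.
  - lra.
Qed.

Lemma A_up phi w c d delta : forecasting_system phi phi -> computable phi -> ML_random phi phi w ->
  0 <= c -> c <= d -> ML_random_I c d w -> 0 < delta ->
  ~ (forall N, exists n, (N <= n)%nat /\ d + delta < phi (prefix w n)).
Proof.
  intros Hfs Hc Hr Hc0 Hcd HrI Hdel Hinf.
  destruct (comp_oracle phi Hc) as [g [Hg Hgb]].
  assert (Hdpos : d + delta < 1).
  { destruct (Hinf 0%nat) as [n [_ Hn]]. destruct (Hfs (prefix w n)). lra. }
  destruct (get_E delta Hdel) as [E [HE He]].
  set (e := 1 / INR E) in *.
  assert (HE' : 8 <= INR E) by (replace 8 with (INR 8) by (simpl; lra); apply le_INR; lia).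
  assert (He0 : 0 < e) by (unfold e; apply Rdiv_lt_0_compat; lra).
  destruct (rat_between d (d + delta / 2) ltac:(lra) ltac:(lra)) as [P [Q [HQ [HP1 HP2]]]].
  assert (HQr : 0 < INR Q) by (apply lt_0_INR; lia).
  assert (HPQ : (P < Q)%nat).
  { apply INR_lt. apply Rmult_lt_reg_r with (/ INR Q). apply Rinv_0_lt_compat; lra.
    rewrite Rinv_r by lra. unfold Rdiv in HP2. lra. }
  assert (HC : INR (Q - P) / INR Q = 1 - INR P / INR Q) by (rewrite minus_INR by lia; field; lra).
  assert (H4 : (4 * Q < (Q - P) * E)%nat).
  { apply INR_lt. rewrite !mult_INR. simpl (INR 4).
    assert (4 * e < INR (Q - P) / INR Q) by lra. unfold e in H. replace (4 * (1 / INR E)) with (4 / INR E) in H by (field; lra).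
    apply div_lt_iff in H; [|lra|lra]. replace (1 + 1 + 1 + 1) with 4 by ring. lra. }
  set (Pt := (P * E + 2 * Q)%nat). set (Qt := (Q * E)%nat).
  assert (HQt : (0 < Qt)%nat) by (unfold Qt; nia).
  assert (Hthr : INR Pt / INR Qt = INR P / INR Q + 2 * e).
  { unfold Pt, Qt, e. rewrite plus_INR, !mult_INR. simpl (INR 2). field. lra. }
  assert (Hpow : (/ 2) ^ E <= e) by (apply half_pow_le; lia).
  apply (A_gen phi w g E false Pt Qt E (Q - P) Q true c d Hfs Hg HE HQ ltac:(lia) H4); auto.
  - intros s HDs. unfold Dn in HDs. apply gtv_spec in HDs; auto. rewrite Hthr in HDs.
    specialize (Hgb s E). apply Rabs_def2 in Hgb. rewrite HC. fold e. lra.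
  - intros N. destruct (Hinf N) as [n [Hn Hlt]]. exists n. split; auto.
    unfold Dn. apply gtv_spec; auto. rewrite Hthr.
    specialize (Hgb (prefix w n) E). apply Rabs_def2 in Hgb. lra.
  - rewrite HC. lra.
Qed.

Open Scope R_scope.
Open Scope R_scope.

Definition dec (m : nat) : list bool := proj1_sig (constructive_indefinite_description _ (enc_surj m)).
Lemma enc_dec m : enc_sit (dec m) = m.
Proof. unfold dec. destruct (constructive_indefinite_description _ _). auto. Qed.
Lemma dec_enc s : dec (enc_sit s) = s.
Proof. apply enc_inj. apply enc_dec. Qed.

Definition Cn (g : nat -> nat) (k : nat) (cL cH : nat -> bool) (p : nat) : bool :=
  cL (g (npair p k)) && cH (g (npair p k)).

Lemma PR_Cn g k cL cH : PR1 g -> PR1 (fun y => b2n (cL y)) -> PR1 (fun y => b2n (cH y)) ->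
  PR1 (fun p => b2n (Cn g k cL cH p)).
Proof.
  intros Hg HL HH.
  assert (H : PR1 (fun p => g (npair p k))) by apply (PR1_c1 _ _ (PR1_c2 _ _ _ PR1_id (PR1_const k) PR_npair) Hg).
  eapply PR1_ext; [|apply (PR1_c2 _ _ _ (PR1_c1 _ _ H HL) (PR1_c1 _ _ H HH) PR_mul)].
  intros p. unfold Cn. destruct (cL _), (cH _); reflexivity.
Qed.

Definition eB (es : nat) (u p : nat) : nat := ifz (ya u) (b2n (p =? es)%nat) 1.

Definition UB g k cL cH es (u p bit : nat) : nat :=
  ifz (ifz (eB es u p) 0 (ifz (yb u) (1 - b2n (Cn g k cL cH p)) 0))
      (npair (eB es u p) (npair (yb u) (yk u)))
      (npair (eB es u p) (npair 1 p)).

Lemma PR_UB g k cL cH es : PR1 g -> PR1 (fun y => b2n (cL y)) -> PR1 (fun y => b2n (cH y)) ->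
  PR3 (UB g k cL cH es).
Proof.
  intros Hg HL HH. unfold UB.
  assert (HE : PR3 (fun u p bit => eB es u p)).
  { unfold eB. apply (PR3_c3 _ _ _ _ (PR3_c1 _ _ PR3_1 PR_ya) (PR3_c2 _ _ _ PR3_2 (PR3_const es) PR_eqb) (PR3_const 1) PR_ifz). }
  assert (HC : PR3 (fun u p bit => b2n (Cn g k cL cH p))) by apply (PR3_c1 _ _ PR3_2 (PR_Cn g k cL cH Hg HL HH)).
  assert (H1 : PR3 (fun u p bit => ifz (eB es u p) 0 (ifz (yb u) (1 - b2n (Cn g k cL cH p)) 0))).
  { apply (PR3_c3 _ _ _ _ HE (PR3_const 0) (PR3_c3 _ _ _ _ (PR3_c1 _ _ PR3_1 PR_yb) (PR3_c2 _ _ _ (PR3_const 1) HC PR_sub) (PR3_const 0) PR_ifz) PR_ifz). }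
  assert (H2 : PR3 (fun u p bit => npair (eB es u p) (npair (yb u) (yk u)))).
  { apply (PR3_c2 _ _ _ HE (PR3_c2 _ _ _ (PR3_c1 _ _ PR3_1 PR_yb) (PR3_c1 _ _ PR3_1 PR_yk) PR_npair) PR_npair). }
  assert (H3 : PR3 (fun u p bit => npair (eB es u p) (npair 1 p))).
  { apply (PR3_c2 _ _ _ HE (PR3_c2 _ _ _ (PR3_const 1) PR3_2 PR_npair) PR_npair). }
  exact (PR3_c3 _ _ _ _ H1 H2 H3 PR_ifz).
Qed.

Definition u0B : nat := npair 0 (npair 0 0).
Definition stB g k cL cH es (s : list bool) : nat := ufoldL (UB g k cL cH es) [] s u0B.

Lemma proj_npair a b c : ya (npair a (npair b c)) = a /\ yb (npair a (npair b c)) = b /\ yk (npair a (npair b c)) = c.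
Proof. unfold ya, yb, yk. rewrite (proj1 (unp_npair _ _)), (proj2 (unp_npair _ _)).
  rewrite (proj1 (unp_npair _ _)), (proj2 (unp_npair _ _)). auto. Qed.

Definition extF g k cL cH es (s : list bool) : bool :=
  negb (ya (stB g k cL cH es s) =? 0)%nat || (enc_sit s =? es)%nat.

Definition frB g k cL cH es (s : list bool) : list bool :=
  if (yb (stB g k cL cH es s) =? 0)%nat then s else dec (yk (stB g k cL cH es s)).

Lemma stB_nil g k cL cH es : stB g k cL cH es [] = u0B.
Proof. reflexivity. Qed.

Lemma stB_snoc g k cL cH es s x :
  stB g k cL cH es (s ++ [x]) = UB g k cL cH es (stB g k cL cH es s) (enc_sit s) (b2n x).
Proof. unfold stB. rewrite ufoldL_snoc. reflexivity. Qed.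

Lemma eB_spec g k cL cH es s :
  Nat.eqb (eB es (stB g k cL cH es s) (enc_sit s)) 0 = negb (extF g k cL cH es s).
Proof.
  unfold eB, extF, ifz. destruct (ya (stB g k cL cH es s) =? 0)%nat; simpl; [|reflexivity].
  destruct (enc_sit s =? es)%nat; reflexivity.
Qed.

Lemma stB_step g k cL cH es s x :
  Nat.eqb (ya (stB g k cL cH es (s ++ [x]))) 0 = negb (extF g k cL cH es s) /\
  Nat.eqb (yb (stB g k cL cH es (s ++ [x]))) 0 =
     andb (Nat.eqb (yb (stB g k cL cH es s)) 0) (negb (andb (extF g k cL cH es s) (negb (Cn g k cL cH (enc_sit s))))) /\
  frB g k cL cH es (s ++ [x]) =
     (if Nat.eqb (yb (stB g k cL cH es s)) 0
      then (if andb (extF g k cL cH es s) (negb (Cn g k cL cH (enc_sit s))) then s else s ++ [x])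
      else frB g k cL cH es s).
Proof.
  pose proof (eB_spec g k cL cH es s) as HE.
  unfold frB at 1. rewrite !stB_snoc.
  unfold frB. set (u := stB g k cL cH es s) in *.
  set (e' := eB es u (enc_sit s)) in *.
  unfold UB. fold e'.
  destruct (extF g k cL cH es s) eqn:Ex; simpl negb in HE; simpl andb;
  destruct (yb u =? 0)%nat eqn:Eb; destruct (Cn g k cL cH (enc_sit s)) eqn:Ec; simpl;
  unfold ifz; rewrite ?HE, ?Eb; simpl;
  repeat rewrite (proj1 (proj_npair _ _ _)); repeat rewrite (proj1 (proj2 (proj_npair _ _ _)));
  repeat rewrite (proj2 (proj2 (proj_npair _ _ _))); rewrite ?HE, ?Eb, ?dec_enc; auto.
Qed.

Lemma Un_cv_div u l M : 0 < M -> Un_cv u l -> Un_cv (fun n => u n / M) (l / M).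
Proof.
  intros HM H e He. destruct (H (e * M)) as [N HN]. nra. exists N. intros n Hn.
  specialize (HN n Hn). unfold R_dist in *.
  replace (u n / M - l / M) with ((u n - l) / M) by (field; lra).
  unfold Rdiv. rewrite Rabs_mult, Rabs_inv, (Rabs_right M) by lra.
  apply Rmult_lt_reg_r with M; auto. rewrite Rmult_assoc, Rinv_l by lra. lra.
Qed.

Lemma B_lsc g k cL cH es (T : list bool -> R) (M : nat) :
  PR1 g -> PR1 (fun y => b2n (cL y)) -> PR1 (fun y => b2n (cH y)) -> (1 <= M)%nat ->
  lower_semicomputable T ->
  lower_semicomputable (fun s => if extF g k cL cH es s then T (frB g k cL cH es s) / INR M else 1).
Proof.
  intros Hg HL HH HM [qT [HqT [Hmono Hcv]]].
  destruct (oracle qT HqT) as [gT [HgT HgTq]].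
  set (U := UB g k cL cH es).
  set (stx := fun x => runU U u0B (unp1 x)).
  set (exB := fun x => ifz (ya (stx x)) (b2n (unp1 x =? es)%nat) 1).
  set (frc := fun x => ifz (yb (stx x)) (unp1 x) (yk (stx x))).
  set (yx := fun x => gT (npair (frc x) (unp2 x))).
  set (FB := fun x => ifz (exB x) (npair 1 (npair 0 0)) (npair (ya (yx x)) (npair (yb (yx x)) ((yk (yx x) + 1) * M - 1)))%nat).
  assert (Hstx : PR1 stx) by apply (PR1_c1 _ _ PR_unp1 (PR_runU U u0B (PR_UB g k cL cH es Hg HL HH))).
  assert (HexB : PR1 exB).
  { apply (PR1_c3 _ _ _ _ (PR1_c1 _ _ Hstx PR_ya) (PR1_c2 _ _ _ PR_unp1 (PR1_const es) PR_eqb) (PR1_const 1) PR_ifz). }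
  assert (Hfrc : PR1 frc).
  { apply (PR1_c3 _ _ _ _ (PR1_c1 _ _ Hstx PR_yb) PR_unp1 (PR1_c1 _ _ Hstx PR_yk) PR_ifz). }
  assert (Hyx : PR1 yx) by apply (PR1_c1 _ _ (PR1_c2 _ _ _ Hfrc PR_unp2 PR_npair) HgT).
  assert (HFB : PR1 FB).
  { apply (PR1_c3 _ _ _ _ HexB (PR1_const _)); [|apply PR_ifz].
    apply (PR1_c2 _ _ _ (PR1_c1 _ _ Hyx PR_ya) (PR1_c2 _ _ _ (PR1_c1 _ _ Hyx PR_yb)
       (PR1_c2 _ _ _ (PR1_c2 _ _ _ (PR1_c2 _ _ _ (PR1_c1 _ _ Hyx PR_yk) (PR1_const 1) PR_add) (PR1_const M) PR_mul) (PR1_const 1) PR_sub) PR_npair) PR_npair). }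
  set (ex := extF g k cL cH es). set (fr := frB g k cL cH es).
  set (Y := fun d n => gT (npair (enc_sit (fr d)) n)).
  set (A := fun d n => if ex d then ya (Y d n) else 1%nat).
  set (B := fun d n => if ex d then yb (Y d n) else 0%nat).
  set (K := fun d n => if ex d then ((yk (Y d n) + 1) * M - 1)%nat else 0%nat).
  assert (HE : forall d n, FB (npair (enc_sit d) n) = npair (A d n) (npair (B d n) (K d n))).
  { intros d n. unfold FB, exB, yx, frc, stx. rewrite (proj1 (unp_npair _ _)), (proj2 (unp_npair _ _)).
    rewrite runU_enc. change (ufoldL U [] d u0B) with (stB g k cL cH es d).
    unfold A, B, K, Y, ex, fr, extF, frB. set (st := stB g k cL cH es d).
    destruct (ya st =? 0)%nat eqn:E1; destruct (enc_sit d =? es)%nat eqn:E2; destruct (yb st =? 0)%nat eqn:E3;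
    unfold ifz; rewrite ?E1, ?E2, ?E3; simpl; rewrite ?enc_dec; reflexivity. }
  pose proof (output FB A B K HFB HE) as HO.
  assert (HMr : 0 < INR M) by (apply lt_0_INR; lia).
  exists (fun d n => (INR (A d n) - INR (B d n)) / (INR (K d n) + 1)). split; [exact HO|].
  assert (Hq : forall d n, (INR (A d n) - INR (B d n)) / (INR (K d n) + 1) =
                 if ex d then qT (fr d) n / INR M else 1).
  { intros d n. unfold A, B, K. destruct (ex d).
    - rewrite HgTq. fold (Y d n). unfold val.
      assert (1 <= (yk (Y d n) + 1) * M)%nat by (apply Nat.le_trans with (1*1)%nat; [lia| apply Nat.mul_le_mono; lia]).
      rewrite minus_INR by auto. rewrite mult_INR, plus_INR. simpl (INR 1).
      pose proof (pos_INR (yk (Y d n))). field. repeat split; [lra|lra|nra].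
    - simpl. lra. }
  split.
  - intros d n. rewrite !Hq. destruct (ex d); [|lra]. unfold Rdiv. apply Rmult_le_compat_r.
    left; apply Rinv_0_lt_compat; auto. apply Hmono.
  - intros d. fold ex fr. eapply Un_cv_ext. intros n. symmetry. apply Hq.
    destruct (ex d). apply Un_cv_div; auto. intros e He. exists 0%nat. intros. unfold R_dist. rewrite Rminus_diag, Rabs_R0. auto.
Qed.

Lemma B_core phi w g k cL cH r1 r2 :
  forecasting_system phi phi -> PR1 g -> PR1 (fun y => b2n (cL y)) -> PR1 (fun y => b2n (cH y)) ->
  (forall s, Cn g k cL cH (enc_sit s) = true -> r1 <= phi s <= r2) ->
  (exists N0, forall n, (N0 <= n)%nat -> Cn g k cL cH (enc_sit (prefix w n)) = true) ->
  ML_random phi phi w -> ML_random_I r1 r2 w.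
Proof.
  intros Hfs Hg HL HH HC [N0 HN0] HR [T [Tl [Tt Tu]]].
  apply HR.
  set (N := S N0). set (sig := prefix w N). set (es := enc_sit sig).
  assert (Hes : es <> 0%nat).
  { unfold es, sig, N. rewrite prefix_S. intros E. change 0%nat with (enc_sit []) in E.
    apply enc_inj in E. apply (f_equal (@length bool)) in E. rewrite length_app in E. simpl in E. lia. }
  destruct Tt as [T0 [Tp Ts]].
  destruct (nat_above (T sig)) as [M0 HM0].
  set (M := S M0).
  assert (HMr : T sig < INR M) by (unfold M; rewrite S_INR; lra).
  assert (HM0r : 0 < INR M) by (unfold M; apply lt_0_INR; lia).
  set (ex := extF g k cL cH es). set (fr := frB g k cL cH es).
  set (st := stB g k cL cH es).
  set (T' := fun s => if ex s then T (fr s) / INR M else 1).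
  exists T'. split; [apply B_lsc; auto; unfold M; lia|].
  assert (Inv : forall s, ((ya (st s) =? 0)%nat = false -> (N < length s)%nat) /\
                          ((yb (st s) =? 0)%nat = false -> (ya (st s) =? 0)%nat = false)).
  { intros s. induction s as [|x s IH] using rev_ind.
    - unfold st. rewrite stB_nil. unfold u0B. destruct (proj_npair 0 0 0) as [-> [-> _]]. simpl. split; discriminate.
    - destruct (stB_step g k cL cH es s x) as [S1 [S2 _]]. fold st ex in S1, S2.
      rewrite S1, S2. rewrite length_app. simpl length. split.
      + destruct (ex s) eqn:Ex; simpl; [|discriminate]. intros _. unfold ex, extF in Ex. fold st in Ex.
        destruct (ya (st s) =? 0)%nat eqn:Ea; simpl in Ex.
        * apply Nat.eqb_eq in Ex. unfold es in Ex. apply enc_inj in Ex. subst s. unfold sig. rewrite prefix_len. lia.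
        * destruct IH as [IH _]. specialize (IH eq_refl). lia.
      + intros Hb. destruct (ex s) eqn:Ex; [reflexivity|]. simpl in Hb.
        destruct (yb (st s) =? 0)%nat eqn:Eb; simpl in Hb; [discriminate|].
        destruct IH as [_ IH]. specialize (IH eq_refl). unfold ex, extF in Ex. fold st in Ex. rewrite IH in Ex. discriminate. }
  split; [split; [|split]|].
  - unfold T'. unfold ex, extF. rewrite stB_nil. unfold u0B. destruct (proj_npair 0 0 0) as [-> _].
    change (enc_sit []) with 0%nat. destruct (0 =? es)%nat eqn:E; [apply Nat.eqb_eq in E; lia|reflexivity].
  - intros s. unfold T'. destruct (ex s); [|lra]. apply Rmult_le_pos; [apply Tp|left; apply Rinv_0_lt_compat; auto].
  - intros s. rewrite ue_point. destruct (Hfs s) as [Hp0 [_ Hp1]].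
    assert (HT : forall x, T' (s ++ [x]) - T' s =
       if ex s then
         (if (yb (st s) =? 0)%nat then (if Cn g k cL cH (enc_sit s) then (T (s ++ [x]) - T s) / INR M else 0) else 0)
       else T' (s ++ [x]) - 1).
    { intros x. destruct (stB_step g k cL cH es s x) as [S1 [S2 S3]]. fold st ex fr in S1, S2, S3.
      unfold T'. fold ex fr. destruct (ex s) eqn:Ex.
      - assert (ex (s ++ [x]) = true).
        { unfold ex at 1, extF. fold st. rewrite S1. reflexivity. }
        rewrite H. rewrite S3.
        assert (Hfr : (yb (st s) =? 0)%nat = true -> fr s = s) by (intros E; unfold fr, frB; fold st; rewrite E; reflexivity).
        destruct (yb (st s) =? 0)%nat eqn:Eb; [|lra]. rewrite (Hfr eq_refl). cbn [negb andb].
        destruct (Cn g k cL cH (enc_sit s)); cbn [negb andb]; [field; lra|lra].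
      - reflexivity. }
    destruct (ex s) eqn:Ex.
    + rewrite (HT true), (HT false).
      destruct (yb (st s) =? 0)%nat eqn:Eb; [|lra].
      destruct (Cn g k cL cH (enc_sit s)) eqn:Ec; [|lra].
      pose proof (HC s Ec) as Hr. pose proof (ue_ge r1 r2 (fun x => T (s ++ [x]) - T s) (phi s) Hr) as Hg'.
      specialize (Ts s). simpl in Hg'.
      replace (phi s * ((T (s ++ [true]) - T s) / INR M) + (1 - phi s) * ((T (s ++ [false]) - T s) / INR M))
        with ((phi s * (T (s ++ [true]) - T s) + (1 - phi s) * (T (s ++ [false]) - T s)) / INR M) by (field; lra).
      unfold Rdiv. rewrite <- (Rmult_0_l (/ INR M)). apply Rmult_le_compat_r. left; apply Rinv_0_lt_compat; auto. lra.
    + rewrite (HT true), (HT false).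
      assert (Hle : forall x, T' (s ++ [x]) <= 1).
      { intros x. unfold T'. destruct (ex (s ++ [x])) eqn:Ex2; [|lra].
        destruct (stB_step g k cL cH es s x) as [S1 [S2 S3]]. fold st ex fr in S1, S2, S3.
        rewrite Ex in S1, S2, S3. simpl in S1, S2, S3. rewrite Bool.andb_true_r in S2.
        destruct Inv with s as [_ Iv]. unfold ex, extF in Ex. fold st in Ex.
        destruct (ya (st s) =? 0)%nat eqn:Ea; simpl in Ex; [|discriminate].
        destruct (yb (st s) =? 0)%nat eqn:Eb; [|specialize (Iv eq_refl); discriminate].
        rewrite S3. unfold ex, extF in Ex2. fold st in Ex2. rewrite S1 in Ex2. simpl in Ex2.
        apply Nat.eqb_eq in Ex2. unfold es in Ex2. apply enc_inj in Ex2. rewrite Ex2.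
        apply Rmult_le_reg_r with (INR M); auto. unfold Rdiv. rewrite Rmult_assoc, Rinv_l by lra. lra. }
      pose proof (Hle true). pose proof (Hle false). nra.
  -
    assert (Along : forall j, ex (prefix w (N + j)) = true /\ (yb (st (prefix w (N + j))) =? 0)%nat = true).
    { induction j.
      - rewrite Nat.add_0_r. fold sig. split.
        + unfold ex, extF. fold es. rewrite Nat.eqb_refl, Bool.orb_true_r. reflexivity.
        + destruct (Inv sig) as [I1 I2]. destruct (yb (st sig) =? 0)%nat eqn:Eb; auto.
          specialize (I1 (I2 eq_refl)). unfold sig in I1. rewrite prefix_len in I1. lia.
      - destruct IHj as [E1 E2]. rewrite Nat.add_succ_r, prefix_S.
        destruct (stB_step g k cL cH es (prefix w (N + j)) (w (N + j)%nat)) as [S1 [S2 _]]. fold st ex in S1, S2.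
        rewrite E1, E2 in S2. rewrite HN0 in S2 by lia. simpl in S2. split; auto.
        unfold ex at 1, extF. fold st. rewrite S1, E1. reflexivity. }
    intros M1 N1. destruct (Tu (M1 * INR M) (N + N1)%nat) as [n [Hn HTn]].
    exists n. split; [lia|]. replace n with (N + (n - N))%nat by lia.
    destruct (Along (n - N)%nat) as [E1 E2]. unfold T'. rewrite E1. unfold fr, frB. fold st. rewrite E2.
    replace (N + (n - N))%nat with n by lia.
    apply Rmult_lt_reg_r with (INR M); auto. unfold Rdiv. rewrite Rmult_assoc, Rinv_l by lra. lra.
Qed.

Open Scope R_scope.
Open Scope R_scope.

Lemma PR_true : PR1 (fun _ : nat => b2n true).
Proof. apply PR1_const. Qed.

Lemma low_part phi g E a eps : forecasting_system phi phi -> 0 < eps -> 1 / INR E < eps / 8 -> (1 <= E)%nat ->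
  (forall d, Rabs (phi d - val (g (npair (enc_sit d) E))) < 1 / INR E) ->
  exists (cL : nat -> bool) r1, PR1 (fun y => b2n (cL y)) /\ Rmax (a - eps) 0 <= r1 /\ r1 <= Rmax (a - eps / 2) 0 /\
    (forall s, cL (g (npair (enc_sit s) E)) = true -> r1 <= phi s) /\
    (forall s, a - eps / 2 <= phi s -> cL (g (npair (enc_sit s) E)) = true).
Proof.
  intros Hfs He HE HE1 Hg.
  assert (HEr : 0 < INR E) by (apply lt_0_INR; lia).
  set (e := 1 / INR E) in *.
  destruct (Rle_dec 0 (a - eps)) as [Hp|Hn].
  - destruct (rat_between (a - eps) (a - 3 * eps / 4) Hp ltac:(lra)) as [P [Q [HQ [H1 H2]]]].
    assert (HQr : 0 < INR Q) by (apply lt_0_INR; lia).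
    exists (gtv (P * E + Q) (Q * E)), (INR P / INR Q). split; [apply PR_gtv|].
    assert (Hthr : INR (P * E + Q) / INR (Q * E) = INR P / INR Q + e).
    { unfold e. rewrite plus_INR, !mult_INR. field. lra. }
    assert (HQE : (0 < Q * E)%nat) by nia.
    split; [rewrite Rmax_left by lra; lra|]. split; [rewrite Rmax_left by lra; lra|]. split.
    + intros s Hs. apply gtv_spec in Hs; auto. rewrite Hthr in Hs. specialize (Hg s). apply Rabs_def2 in Hg. lra.
    + intros s Hs. apply gtv_spec; auto. rewrite Hthr. specialize (Hg s). apply Rabs_def2 in Hg. lra.
  - exists (fun _ => true), 0. split; [apply PR_true|].
    split; [rewrite Rmax_right by lra; lra|]. split; [apply Rmax_r|]. split; auto.
    intros s _. destruct (Hfs s). lra.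
Qed.

Lemma high_part phi g E b eps : forecasting_system phi phi -> 0 < eps -> 0 <= b -> 1 / INR E < eps / 8 -> (1 <= E)%nat ->
  (forall d, Rabs (phi d - val (g (npair (enc_sit d) E))) < 1 / INR E) ->
  exists (cH : nat -> bool) r2, PR1 (fun y => b2n (cH y)) /\ r2 <= Rmin (b + eps) 1 /\ Rmin (b + eps / 2) 1 <= r2 /\
    (forall s, cH (g (npair (enc_sit s) E)) = true -> phi s <= r2) /\
    (forall s, phi s <= b + eps / 2 -> cH (g (npair (enc_sit s) E)) = true).
Proof.
  intros Hfs He Hb HE HE1 Hg.
  assert (HEr : 0 < INR E) by (apply lt_0_INR; lia).
  set (e := 1 / INR E) in *.
  assert (He0 : 0 < e) by (unfold e; apply Rdiv_lt_0_compat; lra).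
  destruct (Rle_dec (b + eps) 1) as [Hp|Hn].
  - destruct (rat_between (b + 3 * eps / 4) (b + eps) ltac:(lra) ltac:(lra)) as [P [Q [HQ [H1 H2]]]].
    assert (HQr : 0 < INR Q) by (apply lt_0_INR; lia).
    assert (HPE : (Q <= P * E)%nat).
    { apply INR_le. rewrite mult_INR. assert (1 / INR E < INR P / INR Q) by (fold e; lra).
      apply div_lt_iff in H; auto. lra. }
    exists (ltv (P * E - Q) (Q * E)), (INR P / INR Q). split; [apply PR_ltv|].
    assert (Hthr : INR (P * E - Q) / INR (Q * E) = INR P / INR Q - e).
    { unfold e. rewrite minus_INR by auto. rewrite !mult_INR. field. lra. }
    assert (HQE : (0 < Q * E)%nat) by nia.
    split; [rewrite Rmin_left by lra; lra|]. split; [rewrite Rmin_left by lra; lra|]. split.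
    + intros s Hs. apply ltv_spec in Hs; auto. rewrite Hthr in Hs. specialize (Hg s). apply Rabs_def2 in Hg. lra.
    + intros s Hs. apply ltv_spec; auto. rewrite Hthr. specialize (Hg s). apply Rabs_def2 in Hg. lra.
  - exists (fun _ => true), 1. split; [apply PR_true|].
    split; [rewrite Rmin_right by lra; lra|]. split; [apply Rmin_r|]. split; auto.
    intros s _. destruct (Hfs s). lra.
Qed.

Lemma B_final phi w a b eps : forecasting_system phi phi -> computable phi -> ML_random phi phi w ->
  0 <= a -> a <= b -> b <= 1 -> 0 < eps ->
  (exists N, forall n, (N <= n)%nat -> a - eps / 2 <= phi (prefix w n) <= b + eps / 2) ->
  ML_random_I (Rmax (a - eps) 0) (Rmin (b + eps) 1) w.
Proof.
  intros Hfs Hc HR Ha Hab Hb1 He [N HN].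
  destruct (comp_oracle phi Hc) as [g [Hg Hgb]].
  destruct (get_E eps He) as [E [HE8 HE]].
  assert (Hpow : (/ 2) ^ E <= 1 / INR E) by (apply half_pow_le; lia).
  assert (Hgb' : forall d, Rabs (phi d - val (g (npair (enc_sit d) E))) < 1 / INR E).
  { intros d. specialize (Hgb d E). lra. }
  destruct (low_part phi g E a eps Hfs He HE ltac:(lia) Hgb') as [cL [r1 [HL [L1 [L2 [L3 L4]]]]]].
  destruct (high_part phi g E b eps Hfs He ltac:(lra) HE ltac:(lia) Hgb') as [cH [r2 [HH [U1 [U2 [U3 U4]]]]]].
  assert (Hr12 : r1 <= r2).
  { assert (Rmax (a - eps / 2) 0 <= Rmin (b + eps / 2) 1); [|lra].
    apply Rmax_lub; [apply Rmin_glb|apply Rmin_glb]; try lra. }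
  apply (ML_up r1 r2); [exact L1|exact Hr12|exact U1|].
  apply (B_core phi w g E cL cH r1 r2 Hfs Hg HL HH).
  - intros s Hs. unfold Cn in Hs. apply andb_prop in Hs. destruct Hs. split; auto.
  - exists N. intros n Hn. unfold Cn. rewrite L4, U4; auto; apply HN; auto.
  - exact HR.
Qed.

Open Scope R_scope.
Open Scope R_scope.

Lemma le_eps x y : (forall e, 0 < e -> x <= y + e) -> x <= y.
Proof. intros H. destruct (Rle_dec x y); auto. specialize (H ((x - y) / 2) ltac:(lra)). lra. Qed.

Lemma main_facts (phi : list bool -> R) (w : nat -> bool) :
  forecasting_system phi phi -> computable phi -> ML_random phi phi w ->
  exists a b : R, 0 <= a /\ a <= b /\ b <= 1 /\
    (forall c d, is_interval c d -> ML_random_I c d w -> c <= a /\ b <= d) /\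
    (forall e, 0 < e -> ML_random_I (Rmax (a - e) 0) (Rmin (b + e) 1) w).
Proof.
  intros Hfs Hc HR.
  set (p := fun n => phi (prefix w n)).
  assert (Hp : forall n, 0 <= p n <= 1) by (intros n; destruct (Hfs (prefix w n)); unfold p; lra).
  set (SA := fun c => exists N, forall n, (N <= n)%nat -> c <= p n).
  set (SB := fun x => exists N, forall n, (N <= n)%nat -> p n <= - x).
  destruct (completeness SA) as [a [Ha1 Ha2]].
  { exists 1. intros c [N HN]. specialize (HN N (le_n _)). specialize (Hp N). lra. }
  { exists 0. exists 0%nat. intros. apply Hp. }
  destruct (completeness SB) as [mb [Hb1 Hb2]].
  { exists 0. intros c [N HN]. specialize (HN N (le_n _)). specialize (Hp N). lra. }
  { exists (-1). exists 0%nat. intros n _. specialize (Hp n). lra. }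
  set (b := - mb).
  assert (A1 : forall e, 0 < e -> exists N, forall n, (N <= n)%nat -> a - e <= p n).
  { intros e He. apply NNPP. intros Hn.
    assert (is_upper_bound SA (a - e)).
    { intros c [N HN]. destruct (Rle_dec c (a - e)) as [|Hc']; auto. exfalso. apply Hn. exists N. intros n Hn'.
      specialize (HN n Hn'). lra. }
    specialize (Ha2 _ H). lra. }
  assert (A2 : forall e, 0 < e -> forall N, exists n, (N <= n)%nat /\ p n < a + e).
  { intros e He N. apply NNPP. intros Hn.
    assert (SA (a + e)).
    { exists N. intros n Hn'. destruct (Rle_dec (a + e) (p n)); auto. exfalso. apply Hn. exists n. split; auto. lra. }
    specialize (Ha1 _ H). lra. }
  assert (B1 : forall e, 0 < e -> exists N, forall n, (N <= n)%nat -> p n <= b + e).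
  { intros e He. apply NNPP. intros Hn.
    assert (is_upper_bound SB (mb - e)).
    { intros c [N HN]. destruct (Rle_dec c (mb - e)) as [|Hc']; auto. exfalso. apply Hn. exists N. intros n Hn'.
      specialize (HN n Hn'). unfold b. lra. }
    specialize (Hb2 _ H). lra. }
  assert (B2 : forall e, 0 < e -> forall N, exists n, (N <= n)%nat /\ b - e < p n).
  { intros e He N. apply NNPP. intros Hn.
    assert (SB (mb + e)).
    { exists N. intros n Hn'. destruct (Rle_dec (p n) (- (mb + e))); auto. exfalso. apply Hn. exists n. split; auto. unfold b. lra. }
    specialize (Hb1 _ H). lra. }
  assert (Ha0 : 0 <= a) by (apply Ha1; exists 0%nat; intros; apply Hp).
  assert (Hb1' : b <= 1) by (assert (SB (-1)) by (exists 0%nat; intros n _; specialize (Hp n); lra); specialize (Hb1 _ H); unfold b; lra).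
  assert (Hab : a <= b).
  { apply le_eps. intros e He. destruct (A1 (e/2) ltac:(lra)) as [N1 H1]. destruct (B1 (e/2) ltac:(lra)) as [N2 H2].
    specialize (H1 (N1 + N2)%nat ltac:(lia)). specialize (H2 (N1 + N2)%nat ltac:(lia)). lra. }
  exists a, b. split; [auto|split; [auto|split; [auto|split]]].
  - intros c d [Hc0 [Hcd Hd1]] HRI. split.
    + destruct (Rle_dec c a) as [|Hlt]; auto. exfalso.
      apply (A_low phi w c d ((c - a) / 2) Hfs Hc HR Hcd Hd1 HRI ltac:(lra)).
      intros N. destruct (A2 ((c - a) / 2) ltac:(lra) N) as [n [Hn Hpn]]. exists n. split; auto. unfold p in Hpn. lra.
    + destruct (Rle_dec b d) as [|Hlt]; auto. exfalso.
      apply (A_up phi w c d ((b - d) / 2) Hfs Hc HR Hc0 Hcd HRI ltac:(lra)).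
      intros N. destruct (B2 ((b - d) / 2) ltac:(lra) N) as [n [Hn Hpn]]. exists n. split; auto. unfold p in Hpn. lra.
  - intros e He. apply (B_final phi w a b e Hfs Hc HR Ha0 Hab Hb1' He).
    destruct (A1 (e/2) ltac:(lra)) as [N1 H1]. destruct (B1 (e/2) ltac:(lra)) as [N2 H2].
    exists (N1 + N2)%nat. intros n Hn. split; [apply H1|apply H2]; lia.
Qed.

Theorem proposition4 (phi : list bool -> R) (w : nat -> bool) :
  forecasting_system phi phi ->
  computable phi ->
  ML_random phi phi w ->
  exists a b : R,
    is_interval a b /\
    (forall x, I_ML w x <-> (a <= x /\ x <= b)) /\
    almost_ML_random a b w /\
    (forall c d, is_interval c d -> almost_ML_random c d w ->
       forall x, I_ML w x -> c <= x /\ x <= d).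
Proof.
  intros Hfs Hc HR.
  destruct (main_facts phi w Hfs Hc HR) as [a [b [Ha [Hab [Hb [K1 K2]]]]]].
  assert (Hint : forall c d e, 0 <= c -> c <= d -> d <= 1 -> 0 < e -> is_interval (Rmax (c - e) 0) (Rmin (d + e) 1)).
  { intros c d e H1 H2 H3 H4. split; [apply Rmax_r|split; [|apply Rmin_r]].
    apply Rmax_lub; apply Rmin_glb; lra. }
  exists a, b. split; [split; [|split]; auto|split; [|split]].
  - intros x. split.
    + intros HI. split.
      * apply le_eps. intros e He. destruct (HI _ _ (Hint a b e Ha Hab Hb He) (K2 e He)) as [H1 _].
        pose proof (Rmax_l (a - e) 0). lra.
      * apply le_eps. intros e He. destruct (HI _ _ (Hint a b e Ha Hab Hb He) (K2 e He)) as [_ H2].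
        pose proof (Rmin_l (b + e) 1). apply NNPP. intros Hn.
        assert (x <= b + e) by lra. contradiction.
    + intros [H1 H2] c d Hcd HRI. destruct (K1 c d Hcd HRI). lra.
  - intros e1 e2 He1 He2. set (e := Rmin e1 e2).
    assert (He : 0 < e) by (unfold e; apply Rmin_glb_lt; auto).
    apply (ML_up (Rmax (a - e) 0) (Rmin (b + e) 1)).
    + apply Rmax_lub; [|apply Rmax_r]. eapply Rle_trans; [|apply Rmax_l]. pose proof (Rmin_l e1 e2). unfold e in *. lra.
    + apply Hint; auto.
    + apply Rmin_glb; [|apply Rmin_r]. eapply Rle_trans; [apply Rmin_l|]. pose proof (Rmin_r e1 e2). unfold e in *. lra.
    + apply K2; auto.
  - intros c d [Hc0 [Hcd Hd1]] HA x HI. split.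
    + apply le_eps. intros e He. destruct (HI _ _ (Hint c d e Hc0 Hcd Hd1 He) (HA e e He He)) as [H1 _].
      pose proof (Rmax_l (c - e) 0). lra.
    + apply le_eps. intros e He. destruct (HI _ _ (Hint c d e Hc0 Hcd Hd1 He) (HA e e He He)) as [_ H2].
      pose proof (Rmin_l (d + e) 1). lra.
Qed.
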